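(* For every $C>0$ there is $N=N(C)$ such that for every $j\in\mathbb Z$ and every pair of $2$-cells $\sigma_0,\sigma_1$ of $X_j$ with $\mathrm{dist}_{\hat d_\infty}(\pi_j^\infty(\sigma_0),\pi_j^\infty(\sigma_1))\le Cm^{-j}$, there is a horizontal gallery in $X_j$ of combinatorial length at most $N$ that starts at $\sigma_0$ and ends at $\sigma_1$.
   Context: Standing construction ($n=2$). Fix an integer $L\ge100$, $m=4$, $m_v=3L$. For $j\in\mathbb Z$, $Y_j$ is the cell complex on $\mathbb R^2$ given by the tiling by rectangles $[am^{-j},(a+1)m^{-j}]\times[bm_v^{-j},(b+1)m_v^{-j}]$, $a,b\in\mathbb Z$; a $1$-cell is vertical if it is a translate of $\{0\}\times[0,m_v^{-j}]$. Let $\Phi(x,y)=(m^{-1}x,m_v^{-1}y)$. For $k,\ell\in\mathbb Z$, $i\in\{1,2,3\}$, $a_{k,\ell,i}=\{k+\tfrac i4\}\times[(3\ell+i-1)m_v^{-1},(3\ell+i)m_v^{-1}]$. $\mathcal R$ is the equivalence relation on $\mathbb R^2$ generated by $p\sim p+(0,m_v^{-1})$ for $p\in a_{k,\ell,i}$. $\Phi^j_*\mathcal R=\{(\Phi^jp,\Phi^jq):(p,q)\in\mathcal R\}$; $\mathcal R_j$ is generated by $\Phi^i_*\mathcal R$, $i<j$; $\mathcal R_\infty$ by all. For $j\in\mathbb Z\cup\{\infty\}$, $X_j=\mathbb R^2/\mathcal R_j$, $\hat\pi^j$ the quotient map, $\pi_j^\infty$ the induced map; $X_j$ has the CW structure whose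 open cells are images of open cells of $Y_j$, vertical $1$-cells being images of vertical $1$-cells. $\hat d_\infty$ is the largest pseudodistance on $X_\infty$ such that for every $i\in\mathbb Z$ and every $2$-cell $\hat\sigma$ of $Y_i$, $\hat\pi^\infty(\hat\sigma)$ has diameter $\le m^{-i}$. A horizontal gallery in $X_j$ is a sequence of $2$-cells $\sigma_1,\dots,\sigma_\ell$ such that $\sigma_{i-1}\cap\sigma_i$ contains a vertical $1$-cell of $X_j$ for all $1<i\le\ell$; its combinatorial length is $\ell$. *)

(* Defs.v *)
From Stdlib Require Import Reals ZArith Arith List Relations.
Open Scope R_scope.

Definition pt : Type := (R * R)%type.

Definition mh : R := 4.
Definition mv (L : nat) : R := 3 * INR L.

Definition Phi_pow (L : nat) (i : Z) (p : pt) : pt :=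
  (fst p * powerRZ mh (- i), snd p * powerRZ (mv L) (- i)).

Definition in_a (L : nat) (k l : Z) (i : nat) (p : pt) : Prop :=
  (1 <= i <= 3)%nat /\
  fst p = IZR k + INR i / 4 /\
  (IZR (3 * l) + INR i - 1) / mv L <= snd p <= (IZR (3 * l) + INR i) / mv L.

Definition R_base (L : nat) (p q : pt) : Prop :=
  exists k l i, in_a L k l i p /\ q = (fst p, snd p + / mv L).

Definition Rrel (L : nat) : relation pt := clos_refl_sym_trans pt (R_base L).

Definition push (L : nat) (i : Z) (p q : pt) : Prop :=
  exists p0 q0, Rrel L p0 q0 /\ p = Phi_pow L i p0 /\ q = Phi_pow L i q0.

Definition Rj (L : nat) (j : Z) : relation pt :=
  clos_refl_sym_trans pt (fun p q => exists i, (i < j)%Z /\ push L i p q).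
Definition Rinf (L : nat) : relation pt :=
  clos_refl_sym_trans pt (fun p q => exists i, push L i p q).

Definition cell2 (L : nat) (j : Z) (c : Z * Z) (p : pt) : Prop :=
  IZR (fst c) * powerRZ mh (- j) <= fst p <= IZR (fst c + 1) * powerRZ mh (- j) /\
  IZR (snd c) * powerRZ (mv L) (- j) <= snd p <= IZR (snd c + 1) * powerRZ (mv L) (- j).

Definition vcell1 (L : nat) (j : Z) (e : Z * Z) (p : pt) : Prop :=
  fst p = IZR (fst e) * powerRZ mh (- j) /\
  IZR (snd e) * powerRZ (mv L) (- j) <= snd p <= IZR (snd e + 1) * powerRZ (mv L) (- j).

(* the point [q] of X_j lies in the image under hat-pi^j of S *)
Definition in_image_Xj (L : nat) (j : Z) (S : pt -> Prop) (q : pt) : Prop :=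
  exists p, S p /\ Rj L j p q.

Definition shares_vertical (L : nat) (j : Z) (c c' : Z * Z) : Prop :=
  exists e, forall q, vcell1 L j e q ->
    in_image_Xj L j (cell2 L j c) q /\ in_image_Xj L j (cell2 L j c') q.

(* horizontal gallery in X_j (list of 2-cells, combinatorial length = length) *)
Definition horizontal_gallery (L : nat) (j : Z) (s : list (Z * Z)) : Prop :=
  s <> nil /\
  forall n, (S n < length s)%nat ->
    shares_vertical L j (nth n s (0%Z, 0%Z)) (nth (S n) s (0%Z, 0%Z)).

(* pseudodistances on X_infty, represented on R^2 and vanishing on R_infty *)
Definition pseudodist_Xinf (L : nat) (d : pt -> pt -> R) : Prop :=
  (forall p, d p p = 0) /\
  (forall p q, 0 <= d p q) /\
  (forall p q, d p q = d q p) /\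
  (forall p q r, d p r <= d p q + d q r) /\
  (forall p q, Rinf L p q -> d p q = 0).

Definition admissible (L : nat) (d : pt -> pt -> R) : Prop :=
  pseudodist_Xinf L d /\
  forall (i : Z) (c : Z * Z) p q,
    cell2 L i c p -> cell2 L i c q -> d p q <= powerRZ mh (- i).

Definition largest_admissible (L : nat) (d : pt -> pt -> R) : Prop :=
  admissible L d /\
  forall d', admissible L d' -> forall p q, d' p q <= d p q.

Definition set_dist_le (d : pt -> pt -> R) (S T : pt -> Prop) (b : R) : Prop :=
  forall eps, 0 < eps -> exists p q, S p /\ T q /\ d p q < b + eps.

(* Main.v *)
Require Import Defs.
From Stdlib Require Import Reals ZArith Arith List Relations Lra Lia Classical.
Open Scope R_scope.

Definition pw (i : Z) : R := powerRZ mh (- i).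
Definition pv (L : nat) (i : Z) : R := powerRZ (mv L) (- i).

Lemma mv_ge (L : nat) : (100 <= L)%nat -> 300 <= mv L.
Proof. intro h. unfold mv. apply le_INR in h. simpl in h. replace (INR 100) with 100 in h.
  lra. simpl; lra. Qed.

Lemma pw_pos i : 0 < pw i.
Proof. unfold pw, mh. apply powerRZ_lt; lra. Qed.

Lemma pv_pos L i : (100 <= L)%nat -> 0 < pv L i.
Proof. intro h. unfold pv. apply powerRZ_lt. pose proof (mv_ge L h); lra. Qed.

Lemma pw_S i : pw (i + 1) = pw i / 4.
Proof. unfold pw, mh. replace (- (i+1))%Z with (- i + - 1)%Z by lia.
  rewrite powerRZ_add by lra. simpl. field. Qed.

Lemma pv_S L i : (100 <= L)%nat -> pv L (i + 1) = pv L i / mv L.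
Proof. intro h. pose proof (mv_ge L h). unfold pv. replace (- (i+1))%Z with (- i + - 1)%Z by lia.
  rewrite powerRZ_add by lra. simpl. field. lra. Qed.

Lemma pw_shift i (d : nat) : pw i = 4 ^ d * pw (i + Z.of_nat d).
Proof. induction d. simpl. replace (i + 0)%Z with i by lia. ring.
  rewrite Nat2Z.inj_succ. replace (i + Z.succ (Z.of_nat d))%Z with ((i + Z.of_nat d) + 1)%Z by lia.
  rewrite pw_S. rewrite IHd. simpl. field. Qed.

Lemma pv_shift L i (d : nat) : (100 <= L)%nat -> pv L i = mv L ^ d * pv L (i + Z.of_nat d).
Proof. intro h. pose proof (mv_ge L h). induction d. simpl. replace (i + 0)%Z with i by lia. ring.
  rewrite Nat2Z.inj_succ. replace (i + Z.succ (Z.of_nat d))%Z with ((i + Z.of_nat d) + 1)%Z by lia.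
  rewrite pv_S by auto. rewrite IHd. simpl. field. lra. Qed.

Lemma pw_Phi L i p : fst (Phi_pow L i p) = fst p * pw i.
Proof. reflexivity. Qed.
Lemma pv_Phi L i p : snd (Phi_pow L i p) = snd p * pv L i.
Proof. reflexivity. Qed.

Record stp := mkS { slev : Z; scell : bool; sa : pt; sb : pt }.

Definition glue (L : nat) (i : Z) (a b : pt) : Prop :=
  exists p0 k l (i' : nat), in_a L k l i' p0 /\
   ((a = Phi_pow L i p0 /\ b = Phi_pow L i (fst p0, snd p0 + / mv L)) \/
    (b = Phi_pow L i p0 /\ a = Phi_pow L i (fst p0, snd p0 + / mv L))).

Definition stepOK (L : nat) (s : stp) : Prop :=
  if scell s then exists c, cell2 L (slev s) c (sa s) /\ cell2 L (slev s) c (sb s)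
  else glue L (slev s) (sa s) (sb s).

Inductive chain (L : nat) : pt -> list stp -> pt -> Prop :=
| ch_nil p : chain L p nil p
| ch_cons p s l q : sa s = p -> stepOK L s -> chain L (sb s) l q -> chain L p (s :: l) q.

Fixpoint cost (l : list stp) : R :=
  match l with nil => 0 | s :: r => (if scell s then pw (slev s) else 0) + cost r end.

Lemma cost_app l1 l2 : cost (l1 ++ l2) = cost l1 + cost l2.
Proof. induction l1; simpl. ring. rewrite IHl1. ring. Qed.

Lemma cost_nonneg l : 0 <= cost l.
Proof. induction l; simpl. lra. destruct (scell a); pose proof (pw_pos (slev a)); lra. Qed.

Lemma chain_app L p l1 r l2 q : chain L p l1 r -> chain L r l2 q -> chain L p (l1 ++ l2) q.
Proof. induction 1; simpl; auto. intro. econstructor; eauto. Qed.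

Lemma chain_app_inv L p l1 l2 q : chain L p (l1 ++ l2) q -> exists r, chain L p l1 r /\ chain L r l2 q.
Proof. revert p. induction l1; simpl; intros p H. exists p; split; auto. constructor.
  inversion H as [|? ? ? ? e1 e2 e3]; subst. destruct (IHl1 _ e3) as [r [H1 H2]]. exists r; split; auto. econstructor; eauto. Qed.

Lemma cell_dx L i c a b : cell2 L i c a -> cell2 L i c b -> Rabs (fst b - fst a) <= pw i.
Proof. unfold cell2, pw. rewrite plus_IZR. intros [[h1 h2] _] [[h3 h4] _]. apply Rabs_le. lra. Qed.

Lemma cell_dy L i c a b : cell2 L i c a -> cell2 L i c b -> Rabs (snd b - snd a) <= pv L i.
Proof. unfold cell2, pv. rewrite !plus_IZR. intros [_ [h1 h2]] [_ [h3 h4]]. apply Rabs_le. lra. Qed.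

Lemma glue_x L i a b : glue L i a b -> fst b = fst a.
Proof. intros [p0 [k [l [i' [_ [[-> ->]|[-> ->]]]]]]]; reflexivity. Qed.

Lemma chain_dx L p l q : chain L p l q -> Rabs (fst q - fst p) <= cost l.
Proof. induction 1. rewrite Rminus_diag, Rabs_R0; simpl; lra. subst p. simpl.
  unfold stepOK in H0. destruct (scell s).
  - destruct H0 as [c [h1 h2]]. pose proof (cell_dx _ _ _ _ _ h1 h2).
    replace (fst q - fst (sa s)) with ((fst q - fst (sb s)) + (fst (sb s) - fst (sa s))) by ring.
    eapply Rle_trans. apply Rabs_triang. lra.
  - rewrite (glue_x _ _ _ _ H0) in IHchain. lra. Qed.

Lemma first_split {A} (P : A -> Prop) (l : list A) :
  Forall (fun y => ~ P y) l \/ exists l1 x l2, l = l1 ++ x :: l2 /\ Forall (fun y => ~ P y) l1 /\ P x.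
Proof. induction l. left; constructor.
  destruct (classic (P a)). right. exists nil, a, l. simpl; auto.
  destruct IHl as [h|[l1 [x [l2 [e [f px]]]]]]. left; constructor; auto.
  right. exists (a :: l1), x, l2. subst. simpl. auto. Qed.

Lemma last_split {A} (P : A -> Prop) (l : list A) :
  (exists x, In x l /\ P x) -> exists l1 x l2, l = l1 ++ x :: l2 /\ P x /\ Forall (fun y => ~ P y) l2.
Proof. induction l using rev_ind. intros [x [[] _]].
  intros [y [hy py]]. destruct (classic (P x)).
  - exists l, x, nil. auto.
  - apply in_app_or in hy. destruct hy as [hy|[<-|[]]]; [|contradiction].
    destruct IHl as [l1 [z [l2 [e [pz f]]]]]. eauto.
    exists l1, z, (l2 ++ x :: nil). subst. rewrite <- app_assoc. simpl. split; auto. split; auto.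
    apply Forall_app; split; auto. Qed.

Definition Reg (L : nat) (n k l : Z) (i : nat) (z : pt) : Prop :=
  fst z = (IZR k + INR i / 4) * pw n /\
  (IZR (3 * l) + INR i - 1) * (pv L n / mv L) <= snd z <= (IZR (3 * l) + INR i + 1) * (pv L n / mv L).

Lemma scale_help y0 X m p : 0 < m -> 0 < p -> (X - 1) / m <= y0 <= X / m ->
  (X - 1) * (p / m) <= y0 * p /\ y0 * p + p / m <= (X + 1) * (p / m) /\ y0 * p <= (X + 1) * (p/m).
Proof. intros hm hp [h1 h2].
  assert (e1 : y0 * p - (X - 1) * (p / m) = (y0 - (X-1)/m) * p) by (field; lra).
  assert (e2 : (X + 1) * (p / m) - (y0 * p + p / m) = (X/m - y0) * p) by (field; lra).
  assert (0 <= (y0 - (X-1)/m) * p) by (apply Rmult_le_pos; lra).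
  assert (0 <= (X/m - y0) * p) by (apply Rmult_le_pos; lra).
  assert (0 < p / m) by (apply Rdiv_lt_0_compat; lra).
  lra. Qed.

Lemma glue_geom L i a b : (100 <= L)%nat -> glue L i a b ->
  exists k l i', (1 <= i' <= 3)%nat /\ Reg L i k l i' a /\ Reg L i k l i' b /\
   (snd b = snd a + pv L i / mv L \/ snd b = snd a - pv L i / mv L).
Proof. intros hL [p0 [k [l [i' [[hi [hx hy]] hab]]]]].
  pose proof (mv_ge L hL) as hm. pose proof (pv_pos L i hL) as hp.
  destruct (scale_help (snd p0) (IZR (3*l) + INR i') (mv L) (pv L i)) as [s1 [s2 s3]]; try lra.
  exists k, l, i'. split; auto. unfold Reg.
  assert (ey : (snd p0 + / mv L) * pv L i = snd p0 * pv L i + pv L i / mv L) by (field; lra).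
  destruct hab as [[-> ->]|[-> ->]]; unfold Phi_pow; cbn [fst snd]; fold (pw i); fold (pv L i);
    rewrite ?ey; rewrite hx; repeat split; try lra.
Qed.

Lemma reg_dy L n k l i a b : Reg L n k l i a -> Reg L n k l i b ->
  Rabs (snd b - snd a) <= 2 * (pv L n / mv L).
Proof. unfold Reg. intros [_ [h1 h2]] [_ [h3 h4]]. apply Rabs_le. lra. Qed.

Lemma reg_sep L n k l i k2 l2 i2 a b : (100 <= L)%nat ->
  (1 <= i <= 3)%nat -> (1 <= i2 <= 3)%nat ->
  Reg L n k l i a -> Reg L n k2 l2 i2 b -> ~ (k = k2 /\ l = l2 /\ i = i2) ->
  pw n / 4 <= Rabs (fst b - fst a) \/ pv L n / mv L <= Rabs (snd b - snd a).
Proof. intros hL hi hi2 [ax [ay1 ay2]] [bx [by1 by2]] hne.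
  pose proof (mv_ge L hL) as hm. pose proof (pv_pos L n hL) as hp. pose proof (pw_pos n) as hw.
  assert (hu : 0 < pv L n / mv L) by (apply Rdiv_lt_0_compat; lra).
  rewrite !INR_IZR_INZ in *.
  destruct (Z.eq_dec (4 * k + Z.of_nat i) (4 * k2 + Z.of_nat i2)) as [e|e].
  - assert (k = k2 /\ i = i2) as [-> ->] by lia.
    assert (l <> l2) by tauto. right.
    destruct (Z_lt_le_dec l l2).
    + assert (IZR (3 * l) + 3 <= IZR (3 * l2)) by (rewrite <- plus_IZR; apply IZR_le; lia).
      assert (snd b - snd a >= pv L n / mv L) by nra. rewrite Rabs_right; lra.
    + assert (IZR (3 * l2) + 3 <= IZR (3 * l)) by (rewrite <- plus_IZR; apply IZR_le; lia).
      assert (snd a - snd b >= pv L n / mv L) by nra. rewrite Rabs_minus_sym, Rabs_right; lra.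
  - left. rewrite ax, bx.
    replace ((IZR k2 + IZR (Z.of_nat i2) / 4) * pw n - (IZR k + IZR (Z.of_nat i) / 4) * pw n)
      with (IZR ((4 * k2 + Z.of_nat i2) - (4 * k + Z.of_nat i)) * (pw n / 4))
      by (rewrite minus_IZR, !plus_IZR, !mult_IZR; field).
    rewrite Rabs_mult, (Rabs_right (pw n / 4)) by lra.
    assert (1 <= Rabs (IZR (4 * k2 + Z.of_nat i2 - (4 * k + Z.of_nat i)))).
    { rewrite <- abs_IZR. apply IZR_le. lia. }
    nra.
Qed.

Definition lvl (n M : Z) (l : list stp) := Forall (fun s => (n <= slev s < M)%Z) l.

Definition bonus (L : nat) (n : Z) (l : list stp) : R :=
  match l with nil => 0 | s :: _ =>
    if Z.eq_dec (slev s) n then (if scell s then mv L * (pv L n / mv L) else 3 / mv L * (pv L n / mv L)) else 0 end.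

Lemma lvl_app n M l1 l2 : lvl n M (l1 ++ l2) -> lvl n M l1 /\ lvl n M l2.
Proof. unfold lvl. rewrite Forall_app. auto. Qed.

Lemma lvl_up n M l : lvl n M l -> Forall (fun y => ~ slev y = n) l -> lvl (n+1) M l.
Proof. unfold lvl. intros h1 h2. rewrite Forall_forall in *. intros x hx.
  specialize (h1 x hx). specialize (h2 x hx). simpl in h2. lia. Qed.

Lemma chain_nil_eq L p q : chain L p nil q -> q = p.
Proof. intro h; inversion h; auto. Qed.

Lemma le8 a b c : 8 <= a -> 0 <= b -> 0 <= c -> 8 * b * c <= a * b * c.
Proof. intros. assert (0 <= b * c) by (apply Rmult_le_pos; auto).
  replace (8 * b * c) with (8 * (b * c)) by ring. replace (a * b * c) with (a * (b * c)) by ring.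
  apply Rmult_le_compat_r; auto. Qed.

Lemma Q_step (L : nat) (hL : (100 <= L)%nat) (n M : Z) :
  (forall p l q, chain L p l q -> lvl (n+1) M l ->
     Rabs (snd q - snd p) <= 3 * pv L (n+1) / mv L + 2 * (pv L (n+1) / pw (n+1)) * cost l) ->
  forall len l p q, (length l <= len)%nat -> chain L p l q -> lvl n M l ->
   Rabs (snd q - snd p) <= (2 + 6 / mv L) * (pv L n / mv L) + 2 * (pv L n / pw n) * cost l - bonus L n l.
Proof.
  intros IHf.
  pose proof (mv_ge L hL) as hm. pose proof (pv_pos L n hL) as hpv. pose proof (pw_pos n) as hw.
  set (m := mv L) in *. set (w := pw n) in *.
  set (u := pv L n / m).
  assert (hu : 0 < u) by (unfold u; apply Rdiv_lt_0_compat; lra).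
  assert (hpvu : pv L n = m * u) by (unfold u; field; lra).
  assert (F : forall p l q, chain L p l q -> lvl (n+1) M l ->
     Rabs (snd q - snd p) <= 3 / m * u + 8 * (u / w) * cost l).
  { intros p l q h1 h2. specialize (IHf p l q h1 h2). rewrite pv_S, pw_S in IHf by auto.
    fold m in IHf. fold w in IHf. fold u in IHf.
    replace (3 / m * u + 8 * (u / w) * cost l) with (3 * u / m + 2 * (u / (w / 4)) * cost l)
      by (field; lra). exact IHf. }
  rewrite hpvu.
  set (rho := u / w).
  assert (hrho : 0 < rho) by (unfold rho; apply Rdiv_lt_0_compat; lra).
  assert (hbeta : 2 * (m * u / w) = 2 * m * rho) by (unfold rho; field; lra).
  rewrite hbeta. fold rho in F.
  assert (hwr : rho * w = u) by (unfold rho; field; lra).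
  induction len as [|len IH]; intros l p q hlen hch hlv.
  { destruct l; simpl in hlen; [|lia]. apply chain_nil_eq in hch. subst q.
    unfold Rminus. rewrite Rplus_opp_r, Rabs_R0. simpl.
    assert (0 < 6/m) by (apply Rdiv_lt_0_compat; lra). nra. }
  destruct l as [|s r].
  { apply chain_nil_eq in hch. subst q. unfold Rminus. rewrite Rplus_opp_r, Rabs_R0. simpl.
    assert (0 < 6/m) by (apply Rdiv_lt_0_compat; lra). nra. }
  assert (h3m : 3 / m <= 1/100) by (apply Rmult_le_reg_r with m; [lra|]; field_simplify; lra).
  assert (h3m0 : 0 < 3 / m) by (apply Rdiv_lt_0_compat; lra).
  assert (h6m : 6 / m = 2 * (3 / m)) by (field; lra).
  rewrite h6m in *.
  assert (h3mu : 3 / m * u <= u / 100) by (apply Rmult_le_reg_r with (/u); [apply Rinv_0_lt_compat; lra|]; field_simplify; lra).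
  assert (h3mu0 : 0 < 3 / m * u) by (apply Rmult_lt_0_compat; lra).
  assert (hmu300 : m * u >= 300 * u) by nra.
  destruct (Z.eq_dec (slev s) n) as [en|ne].
  -
    inversion hch as [|p0 s0 r0 q0 esa hok hr]; subst p0 s0 r0 q0. subst p.
    destruct (scell s) eqn:ec.
    +
      unfold stepOK in hok. rewrite ec in hok. destruct hok as [c [hc1 hc2]].
      pose proof (cell_dy _ _ _ _ _ hc1 hc2) as hdy. rewrite en in hdy. fold (pv L n) in hdy.
      rewrite hpvu in hdy.
      assert (hlr : (length r <= len)%nat) by (simpl in hlen; lia).
      pose proof (Forall_inv_tail hlv) as hlr'.
      specialize (IH r (sb s) q hlr hr hlr').
      assert (hbr : 0 <= bonus L n r).
      { destruct r as [|s' r']; simpl; [lra|]. destruct (Z.eq_dec (slev s') n); [|lra].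
        destruct (scell s'); fold m; fold u; nra. }
      simpl cost. rewrite ec, en. fold w. unfold bonus. rewrite en. destruct (Z.eq_dec n n); [|congruence].
      rewrite ec. fold m. fold u.
      replace (snd q - snd (sa s)) with ((snd q - snd (sb s)) + (snd (sb s) - snd (sa s))) by ring.
      eapply Rle_trans. apply Rabs_triang.
      assert (2 * m * rho * (w + cost r) = 2 * m * u + 2 * m * rho * cost r) by (rewrite <- hwr; ring).
      nra.
    +
      unfold stepOK in hok. rewrite ec in hok. rewrite en in hok.
      destruct (glue_geom L n _ _ hL hok) as [k0 [l0 [i0 [hi0 [hra [hrb _]]]]]].
      set (P := fun x : stp => slev x = n /\ scell x = false /\ Reg L n k0 l0 i0 (sa x) /\ Reg L n k0 l0 i0 (sb x)).
      destruct (last_split P (s :: r)) as [pre [g2 [ch3 [es [Pg2 nP]]]]].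
      { exists s. split. left; auto. unfold P. auto. }
      rewrite es in hch. apply chain_app_inv in hch. destruct hch as [r1 [hpre hg]].
      inversion hg as [|p0 s0 r0 q0 esa2 hok2 h3]; subst p0 s0 r0 q0.
      rewrite es in hlv. apply lvl_app in hlv. destruct hlv as [_ hlv3]. pose proof (Forall_inv_tail hlv3) as hlv3'.
      destruct Pg2 as [_ [_ [_ Rg2]]].
      pose proof (reg_dy _ _ _ _ _ _ _ hra Rg2) as hd1. fold m in hd1. fold u in hd1.
      assert (hcost : cost (s :: r) = cost pre + (if scell g2 then pw (slev g2) else 0) + cost ch3).
      { rewrite es, cost_app. simpl. ring. }
      assert (hcg : 0 <= (if scell g2 then pw (slev g2) else 0)) by (destruct (scell g2); [apply Rlt_le, pw_pos|lra]).
      pose proof (cost_nonneg pre).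
      assert (hb : bonus L n (s :: r) = 3 / m * u).
      { unfold bonus. rewrite en. destruct (Z.eq_dec n n); [|congruence]. rewrite ec. reflexivity. }
      rewrite hb.
      replace (snd q - snd (sa s)) with ((snd q - snd (sb g2)) + (snd (sb g2) - snd (sa s))) by ring.
      eapply Rle_trans. apply Rabs_triang.
      assert (hlen3 : (S (length ch3) <= S len)%nat).
      { rewrite es in hlen. rewrite length_app in hlen. simpl in hlen. lia. }
      destruct (first_split (fun x : stp => slev x = n) ch3) as [allf|[a [sg [b [e3 [fa sgn]]]]]].
      * pose proof (F _ _ _ h3 (lvl_up _ _ _ hlv3' allf)) as hF.
        pose proof (cost_nonneg ch3).
        assert (8 * rho * cost ch3 <= 2 * m * rho * cost ch3) by (apply le8; lra).
        assert (2 * m * rho * cost ch3 <= 2 * m * rho * cost (s :: r)).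
        { apply Rmult_le_compat_l. nra. lra. }
        lra.
      * rewrite e3 in h3. apply chain_app_inv in h3. destruct h3 as [r3 [ha hb3]].
        rewrite e3 in hlv3'. apply lvl_app in hlv3'. destruct hlv3' as [hla hlb].
        pose proof (F _ _ _ ha (lvl_up _ _ _ hla fa)) as hFa.
        assert (hlb' : (length (sg :: b) <= len)%nat).
        { rewrite e3, length_app in hlen3. simpl in *. lia. }
        specialize (IH (sg :: b) r3 q hlb' hb3 hlb).
        assert (hc3 : cost ch3 = cost a + cost (sg :: b)) by (rewrite e3, cost_app; ring).
        pose proof (cost_nonneg a). pose proof (cost_nonneg (sg :: b)).
        assert (8 * rho * cost a <= 2 * m * rho * cost a) by (apply le8; lra).
        replace (snd q - snd (sb g2)) with ((snd q - snd r3) + (snd r3 - snd (sb g2))) by ring.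
        eapply Rle_trans. apply Rplus_le_compat_r. apply Rabs_triang.
        unfold bonus in IH. rewrite sgn in IH. destruct (Z.eq_dec n n); [|congruence].
        inversion hb3 as [|p0 s0 r0 q0 esa3 hok3 _]; subst p0 s0 r0 q0. subst r3.
        assert (2 * m * rho * (cost a + cost (sg :: b)) <= 2 * m * rho * cost (s :: r)).
        { apply Rmult_le_compat_l. nra. rewrite hcost, hc3. lra. }
        assert (hmu : m * u >= 300 * u) by nra.
        destruct (scell sg) eqn:ecg; rewrite ?ecg in IH.
        -- fold m in IH. fold u in IH. lra.
        -- fold m in IH. fold u in IH.
           unfold stepOK in hok3. rewrite ecg, sgn in hok3.
           destruct (glue_geom L n _ _ hL hok3) as [k2 [l2 [i2 [hi2 [hr2a [hr2b _]]]]]].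
           assert (hne : ~ (k0 = k2 /\ l0 = l2 /\ i0 = i2)).
           { intros [-> [-> ->]]. rewrite Forall_forall in nP. apply (nP sg).
             rewrite e3. apply in_or_app. right; left; auto.
             unfold P. auto. }
           assert (hca : w / 16 <= cost a).
           { destruct (reg_sep L n k0 l0 i0 k2 l2 i2 _ _ hL hi0 hi2 Rg2 hr2a hne) as [hx|hy].
             - fold w in hx. pose proof (chain_dx _ _ _ _ ha). lra.
             - fold m in hy. fold u in hy.
               assert (u * (1 - 3/m) <= 8 * rho * cost a) by lra.
               assert (u * (1 - 3/m) >= u * (99/100)) by nra.
               assert (u / 16 <= rho * cost a) by lra.
               apply Rmult_le_reg_l with rho; [lra|].
               replace (rho * (w / 16)) with ((rho * w) / 16) by field. rewrite hwr. lra. }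
           assert (2 * m * rho * cost a - 8 * rho * cost a >= 37 * u).
           { assert (hH5 : rho * cost a >= rho * (w / 16)) by (apply Rle_ge, Rmult_le_compat_l; lra).
             replace (rho * (w / 16)) with ((rho * w) / 16) in hH5 by field. rewrite hwr in hH5.
             assert (2 * m * rho * cost a - 8 * rho * cost a = (2 * m - 8) * (rho * cost a)) by ring.
             assert ((2 * m - 8) * (rho * cost a) >= (2 * m - 8) * (u / 16)) by (apply Rle_ge, Rmult_le_compat_l; lra).
             assert ((2*m - 8) * (u / 16) = (m * u) / 8 - u / 2) by field.
             lra. }
           lra.
  -
    destruct (first_split (fun x : stp => slev x = n) (s :: r)) as [allf|[a [sg [b [e3 [fa sgn]]]]]].
    + pose proof (F _ _ _ hch (lvl_up _ _ _ hlv allf)) as hF.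
      unfold bonus. destruct (Z.eq_dec (slev s) n); [congruence|].
      pose proof (cost_nonneg (s :: r)).
      assert (8 * rho * cost (s :: r) <= 2 * m * rho * cost (s :: r)) by (apply le8; lra).
      nra.
    + destruct a as [|a0 a'].
      { simpl in e3. inversion e3; subst. congruence. }
      rewrite e3 in hch. apply chain_app_inv in hch. destruct hch as [r3 [ha hb3]].
      rewrite e3 in hlv. apply lvl_app in hlv. destruct hlv as [hla hlb].
      pose proof (F _ _ _ ha (lvl_up _ _ _ hla fa)) as hFa.
      assert (hlb' : (length (sg :: b) <= len)%nat).
      { rewrite e3, length_app in hlen. simpl in *. lia. }
      specialize (IH (sg :: b) r3 q hlb' hb3 hlb).
      assert (hc3 : cost (s :: r) = cost (a0 :: a') + cost (sg :: b)) by (rewrite e3, cost_app; ring).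
      pose proof (cost_nonneg (a0 :: a')). pose proof (cost_nonneg (sg :: b)).
      assert (8 * rho * cost (a0 :: a') <= 2 * m * rho * cost (a0 :: a')) by (apply le8; lra).
      assert (hbn : bonus L n (s :: r) = 0).
      { unfold bonus. destruct (Z.eq_dec (slev s) n); [congruence|auto]. }
      rewrite hbn.
      assert (hbs : bonus L n (sg :: b) >= 3 / m * u).
      { unfold bonus. rewrite sgn. destruct (Z.eq_dec n n); [|congruence]. fold m. fold u.
        destruct (scell sg); nra. }
      replace (snd q - snd p) with ((snd q - snd r3) + (snd r3 - snd p)) by ring.
      eapply Rle_trans. apply Rabs_triang. nra.
Qed.

Lemma bonus_nonneg L n l : (100 <= L)%nat -> 0 <= bonus L n l.
Proof. intro hL. pose proof (mv_ge L hL). pose proof (pv_pos L n hL).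
  assert (0 < pv L n / mv L) by (apply Rdiv_lt_0_compat; lra).
  assert (0 < 3 / mv L) by (apply Rdiv_lt_0_compat; lra).
  destruct l as [|s r]; simpl; [lra|]. destruct (Z.eq_dec (slev s) n); [|lra].
  destruct (scell s); apply Rlt_le, Rmult_lt_0_compat; lra. Qed.

Lemma Qbound_k (L : nat) (hL : (100 <= L)%nat) : forall (k : nat) n M, (M - n <= Z.of_nat k)%Z ->
  forall p l q, chain L p l q -> lvl n M l ->
  Rabs (snd q - snd p) <= 3 * pv L n / mv L + 2 * (pv L n / pw n) * cost l.
Proof.
  pose proof (mv_ge L hL) as hm.
  induction k; intros n M hk p l q hch hlv.
  - destruct l as [|s r].
    + apply chain_nil_eq in hch. subst. unfold Rminus. rewrite Rplus_opp_r, Rabs_R0. simpl.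
      pose proof (pv_pos L n hL). assert (0 < 3 * pv L n / mv L) by (apply Rdiv_lt_0_compat; lra). lra.
    + inversion hlv. simpl in hk. lia.
  - pose proof (Q_step L hL n M (IHk (n+1)%Z M ltac:(lia)) (length l) l p q (le_n _) hch hlv) as h.
    pose proof (bonus_nonneg L n l hL).
    pose proof (pv_pos L n hL). pose proof (cost_nonneg l). pose proof (pw_pos n).
    assert (0 <= 2 * (pv L n / pw n) * cost l).
    { apply Rmult_le_pos; [|lra]. apply Rmult_le_pos; [lra|]. apply Rlt_le, Rdiv_lt_0_compat; lra. }
    assert ((2 + 6 / mv L) * (pv L n / mv L) <= 3 * pv L n / mv L).
    { apply Rmult_le_reg_r with (mv L); [lra|]. field_simplify; try lra.
      apply Rmult_le_reg_r with (mv L); [lra|]. field_simplify; try lra. nra. }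
    lra.
Qed.

Lemma maxlev (l : list stp) : exists M, Forall (fun s => (slev s < M)%Z) l.
Proof. induction l. exists 0%Z; constructor. destruct IHl as [M hM].
  exists (Z.max M (slev a + 1)). constructor. lia.
  eapply Forall_impl; [|exact hM]. simpl; intros; lia. Qed.

Lemma Qbound (L : nat) (hL : (100 <= L)%nat) n p l q : chain L p l q ->
  Forall (fun s => (n <= slev s)%Z) l ->
  Rabs (snd q - snd p) <= 3 * pv L n / mv L + 2 * (pv L n / pw n) * cost l.
Proof. intros hch hf. destruct (maxlev l) as [M hM].
  apply (Qbound_k L hL (Z.to_nat (M - n)) n M ltac:(lia) p l q hch).
  unfold lvl. rewrite Forall_forall in *. intros x hx. specialize (hf x hx). specialize (hM x hx). lia. Qed.

Definition rev_step (s : stp) : stp := mkS (slev s) (scell s) (sb s) (sa s).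

Lemma stepOK_rev L s : stepOK L s -> stepOK L (rev_step s).
Proof. unfold stepOK, rev_step; simpl. destruct (scell s).
  - intros [c [h1 h2]]; eauto.
  - intros [p0 [k [l [i' [h [[e1 e2]|[e1 e2]]]]]]]; exists p0, k, l, i'; split; auto. Qed.

Lemma chain_rev L p l q : chain L p l q -> exists l', chain L q l' p /\ cost l' = cost l.
Proof. induction 1.
  - exists nil; split; [constructor|auto].
  - destruct IHchain as [l' [h1 h2]]. exists (l' ++ rev_step s :: nil). split.
    + apply chain_app with (sb s); auto. econstructor. reflexivity. apply stepOK_rev; auto.
      simpl. subst p. constructor.
    + rewrite cost_app. simpl. rewrite h2. ring. Qed.

Lemma Rrel_chain L p0 q0 : Rrel L p0 q0 -> forall i, exists l, chain L (Phi_pow L i p0) l (Phi_pow L i q0) /\ cost l = 0.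
Proof. induction 1; intro i.
  - destruct H as [k [l [i' [ha ->]]]]. exists (mkS i false (Phi_pow L i x) (Phi_pow L i (fst x, snd x + / mv L)) :: nil).
    split; [|simpl; ring]. econstructor. reflexivity. unfold stepOK; simpl. exists x, k, l, i'. split; auto.
    simpl. constructor.
  - exists nil; split; [constructor|auto].
  - destruct (IHclos_refl_sym_trans i) as [l [h1 h2]]. destruct (chain_rev _ _ _ _ h1) as [l' [h3 h4]].
    exists l'; split; auto; lra.
  - destruct (IHclos_refl_sym_trans1 i) as [l1 [h1 e1]]. destruct (IHclos_refl_sym_trans2 i) as [l2 [h2 e2]].
    exists (l1 ++ l2). split. eapply chain_app; eauto. rewrite cost_app; lra. Qed.

Lemma Rinf_chain L p q : Rinf L p q -> exists l, chain L p l q /\ cost l = 0.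
Proof. induction 1.
  - destruct H as [i [p0 [q0 [h [-> ->]]]]]. apply Rrel_chain; auto.
  - exists nil; split; [constructor|auto].
  - destruct IHclos_refl_sym_trans as [l [h1 h2]]. destruct (chain_rev _ _ _ _ h1) as [l' [h3 h4]].
    exists l'; split; auto; lra.
  - destruct IHclos_refl_sym_trans1 as [l1 [h1 e1]]. destruct IHclos_refl_sym_trans2 as [l2 [h2 e2]].
    exists (l1 ++ l2). split. eapply chain_app; eauto. rewrite cost_app; lra. Qed.

(* truncated chain pseudodistance *)
Definition Eset (L : nat) (M0 : R) (p q : pt) (r : R) : Prop :=
  r = 0 \/ exists l, chain L p l q /\ cost l <= M0 /\ r = M0 - cost l.

Lemma Eset_bound L M0 p q : 0 <= M0 -> bound (Eset L M0 p q).
Proof. intro h. exists M0. intros r [->|[l [_ [_ ->]]]]. lra. pose proof (cost_nonneg l); lra. Qed.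

Definition supE (L : nat) (M0 : R) (h : 0 <= M0) (p q : pt) : R :=
  proj1_sig (completeness (Eset L M0 p q) (Eset_bound L M0 p q h) (ex_intro _ 0 (or_introl eq_refl))).

Lemma supE_lub L M0 h p q : is_lub (Eset L M0 p q) (supE L M0 h p q).
Proof. unfold supE. destruct completeness; simpl; auto. Qed.

Definition dlt (L : nat) (M0 : R) (h : 0 <= M0) (p q : pt) : R := M0 - supE L M0 h p q.

Lemma dlt_range L M0 h p q : 0 <= dlt L M0 h p q <= M0.
Proof. unfold dlt. destruct (supE_lub L M0 h p q) as [ub lub]. split.
  - assert (supE L M0 h p q <= M0). apply lub. intros r [->|[l [_ [_ ->]]]]. lra. pose proof (cost_nonneg l); lra. lra.
  - assert (0 <= supE L M0 h p q). apply ub. left; auto. lra. Qed.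

Lemma dlt_le_chain L M0 h p q l : chain L p l q -> dlt L M0 h p q <= cost l.
Proof. intro hc. destruct (Rle_lt_dec (cost l) M0).
  - unfold dlt. destruct (supE_lub L M0 h p q) as [ub lub].
    assert (M0 - cost l <= supE L M0 h p q). apply ub. right; eauto. lra.
  - pose proof (dlt_range L M0 h p q). lra. Qed.

Lemma dlt_approx L M0 h p q eps : 0 < eps -> dlt L M0 h p q + eps <= M0 ->
  exists l, chain L p l q /\ cost l < dlt L M0 h p q + eps.
Proof. intros he hle. apply NNPP. intro hn.
  destruct (supE_lub L M0 h p q) as [ub lub]. unfold dlt in *.
  assert (supE L M0 h p q <= supE L M0 h p q - eps); [|lra].
  apply lub. intros r [->|[l [hc [_ ->]]]]. lra.
  assert (~ cost l < M0 - supE L M0 h p q + eps) by (intro; apply hn; eauto). lra. Qed.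

Lemma Eset_sub L M0 p q r : Eset L M0 p q r -> Eset L M0 q p r.
Proof. intros [->|[l [hc [hl ->]]]]. left; auto. destruct (chain_rev _ _ _ _ hc) as [l' [h1 h2]].
  right. exists l'. rewrite h2. auto. Qed.

Lemma dlt_sym_le L M0 h p q : dlt L M0 h p q <= dlt L M0 h q p.
Proof. unfold dlt. destruct (supE_lub L M0 h p q) as [ub1 lub1]. destruct (supE_lub L M0 h q p) as [ub2 lub2].
  assert (supE L M0 h q p <= supE L M0 h p q). apply lub2. intros r hr. apply ub1. apply Eset_sub; auto. lra. Qed.

Lemma dlt_admissible L M0 (h : 0 <= M0) : admissible L (dlt L M0 h).
Proof. split; [split; [|split; [|split; [|split]]]|].
  - intro p. pose proof (dlt_range L M0 h p p). pose proof (dlt_le_chain L M0 h p p nil (ch_nil L p)). simpl in *. lra.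
  - intros p q. apply dlt_range.
  - intros p q. pose proof (dlt_sym_le L M0 h p q). pose proof (dlt_sym_le L M0 h q p). lra.
  - intros p q r. pose proof (dlt_range L M0 h p q). pose proof (dlt_range L M0 h q r). pose proof (dlt_range L M0 h p r).
    destruct (Rle_lt_dec M0 (dlt L M0 h p q + dlt L M0 h q r)). lra.
    apply Rnot_lt_le. intro hlt.
    set (e := Rmin ((dlt L M0 h p r - (dlt L M0 h p q + dlt L M0 h q r)) / 3) ((M0 - (dlt L M0 h p q + dlt L M0 h q r)) / 2)).
    assert (he : 0 < e) by (unfold e; apply Rmin_pos; lra).
    assert (he1 : e <= (dlt L M0 h p r - (dlt L M0 h p q + dlt L M0 h q r)) / 3) by apply Rmin_l.
    assert (he2 : e <= (M0 - (dlt L M0 h p q + dlt L M0 h q r)) / 2) by apply Rmin_r.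
    destruct (dlt_approx L M0 h p q e he ltac:(lra)) as [l1 [c1 hc1]].
    destruct (dlt_approx L M0 h q r e he ltac:(lra)) as [l2 [c2 hc2]].
    pose proof (dlt_le_chain L M0 h p r (l1 ++ l2) (chain_app _ _ _ _ _ _ c1 c2)). rewrite cost_app in H2. lra.
  - intros p q hr. destruct (Rinf_chain L p q hr) as [l [hc e]]. pose proof (dlt_le_chain L M0 h p q l hc).
    pose proof (dlt_range L M0 h p q). lra.
  - intros i c p q h1 h2. pose proof (dlt_le_chain L M0 h p q (mkS i true p q :: nil)) as hh.
    simpl in hh. fold (pw i). rewrite Rplus_0_r in hh. apply hh.
    econstructor. reflexivity. unfold stepOK; simpl. eauto. constructor. Qed.

Lemma cheap_chain L d j s0 s1 C : largest_admissible L d -> 0 < C ->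
  set_dist_le d (cell2 L j s0) (cell2 L j s1) (C * powerRZ mh (- j)) ->
  exists p q l, cell2 L j s0 p /\ cell2 L j s1 q /\ chain L p l q /\ cost l < (C + 1) * pw j.
Proof. intros [_ hmax] hC hd. fold (pw j) in hd. pose proof (pw_pos j) as hw.
  assert (h0 : 0 <= (C + 1) * pw j) by nra.
  destruct (hd (pw j / 4) ltac:(lra)) as [p [q [hp [hq hpq]]]].
  pose proof (hmax _ (dlt_admissible L _ h0) p q) as hle.
  pose proof (dlt_range L _ h0 p q).
  destruct (dlt_approx L _ h0 p q (pw j / 4) ltac:(lra) ltac:(change (powerRZ mh (- j)) with (pw j) in hpq; lra)) as [l [hc hcost]].
  exists p, q, l. split; [auto|split; [auto|split; [auto|]]]. change (powerRZ mh (- j)) with (pw j) in hpq. lra. Qed.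

Inductive hg (L : nat) (j : Z) : Z * Z -> Z * Z -> nat -> Prop :=
| hg1 c : hg L j c c 1
| hgS c c' c'' n : shares_vertical L j c c' -> hg L j c' c'' n -> hg L j c c'' (S n).

Lemma hg_gallery L j c c' n : hg L j c c' n ->
  exists g, horizontal_gallery L j g /\ length g = n /\ nth 0 g (0%Z, 0%Z) = c /\ last g (0%Z, 0%Z) = c'.
Proof. induction 1.
  - exists (c :: nil). split; [|simpl; auto]. split. congruence. intros n h. simpl in h. lia.
  - destruct IHhg as [g [[hne hg'] [hl [h0 hlast]]]]. exists (c :: g). split; [split|].
    + congruence.
    + intros m hm. destruct m. simpl. destruct g; [congruence|]. simpl in h0. subst. auto.
      simpl. apply hg'. simpl in hm. lia.
    + split. simpl; lia. split. auto. destruct g; [congruence|]. simpl. simpl in hlast. auto. Qed.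

Definition hgle L j c c' (N : nat) := exists n, hg L j c c' n /\ (n <= N)%nat.

Lemma hg_trans L j c1 c2 c3 n1 n2 : hg L j c1 c2 n1 -> hg L j c2 c3 n2 -> hg L j c1 c3 (n1 + n2 - 1).
Proof. induction 1; intro h. simpl. replace (n2 - 0)%nat with n2 by lia. auto.
  specialize (IHhg h). inversion h; subst.
  - replace (S n + 1 - 1)%nat with (S n) by lia. replace (n + 1 - 1)%nat with n in IHhg by lia. econstructor; eauto.
  - replace (S n + S n0 - 1)%nat with (S (n + S n0 - 1)) by (inversion H0; lia). econstructor; eauto. Qed.

Lemma hgle_trans L j c1 c2 c3 N1 N2 : hgle L j c1 c2 N1 -> hgle L j c2 c3 N2 -> hgle L j c1 c3 (N1 + N2).
Proof. intros [n1 [h1 e1]] [n2 [h2 e2]]. exists (n1 + n2 - 1)%nat. split. eapply hg_trans; eauto. lia. Qed.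

Lemma hgle_mono L j c c' N N' : hgle L j c c' N -> (N <= N')%nat -> hgle L j c c' N'.
Proof. intros [n [h e]] hN. exists n. split; auto. lia. Qed.

Lemma hgle_refl L j c : hgle L j c c 1.
Proof. exists 1%nat. split. constructor. lia. Qed.

Lemma sv_sym L j c c' : shares_vertical L j c c' -> shares_vertical L j c' c.
Proof. intros [e h]. exists e. intros q hq. destruct (h q hq); split; auto. Qed.

Lemma hg_snoc L j c c' c'' n : hg L j c c' n -> shares_vertical L j c' c'' -> hg L j c c'' (S n).
Proof. induction 1; intro h. econstructor; eauto. constructor. econstructor; eauto. Qed.

Lemma hg_sym L j c c' n : hg L j c c' n -> hg L j c' c n.
Proof. induction 1. constructor. eapply hg_snoc; eauto. apply sv_sym; auto. Qed.

Lemma hgle_sym L j c c' N : hgle L j c c' N -> hgle L j c' c N.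
Proof. intros [n [h e]]. exists n; split; auto. apply hg_sym; auto. Qed.

Lemma sv_hgle L j c c' : shares_vertical L j c c' -> hgle L j c c' 2.
Proof. intro h. exists 2%nat. split; [|lia]. econstructor; eauto. constructor. Qed.

Lemma sv_horiz L j a b : shares_vertical L j (a, b) ((a + 1)%Z, b).
Proof. exists ((a + 1)%Z, b). intros q [hx hy]. simpl in *. pose proof (pw_pos j) as hw. unfold pw in hw.
  split; exists q; (split; [|apply rst_refl]); unfold cell2; simpl; rewrite ?plus_IZR in *; split; try lra. Qed.

Lemma hgle_horiz L j b : forall (d : nat) a, hgle L j (a, b) ((a + Z.of_nat d)%Z, b) (2 * d + 1).
Proof. induction d; intro a. replace (a + Z.of_nat 0)%Z with a by lia. apply hgle_refl.
  replace (2 * S d + 1)%nat with (2 + (2 * d + 1))%nat by lia. apply hgle_trans with ((a + 1)%Z, b).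
  apply sv_hgle, sv_horiz. replace (a + Z.of_nat (S d))%Z with ((a + 1) + Z.of_nat d)%Z by lia. apply IHd. Qed.

Lemma hgle_horiz' L j a a' b : hgle L j (a, b) (a', b) (2 * Z.to_nat (Z.abs (a' - a)) + 1).
Proof. destruct (Z_le_gt_dec a a').
  - replace a' with (a + Z.of_nat (Z.to_nat (Z.abs (a' - a))))%Z at 1 by lia. apply hgle_horiz.
  - apply hgle_sym. replace a with (a' + Z.of_nat (Z.to_nat (Z.abs (a' - a))))%Z at 1 by lia. apply hgle_horiz. Qed.

Lemma jump L j i k l (i' : nat) a0 r S : (100 <= L)%nat -> (i < j)%Z -> (1 <= i' <= 3)%nat ->
  IZR a0 * pw j = (IZR k + INR i' / 4) * pw i ->
  IZR S * pv L j = pv L i / mv L ->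
  (IZR (3 * l) + INR i' - 1) * (pv L i / mv L) <= IZR r * pv L j ->
  IZR (r + 1) * pv L j <= (IZR (3 * l) + INR i') * (pv L i / mv L) ->
  shares_vertical L j ((a0 - 1)%Z, r) (a0, (r + S)%Z).
Proof. intros hL hij hi ha hS hlo hhi.
  pose proof (pw_pos j) as hw. pose proof (pv_pos L j hL) as hv. pose proof (pv_pos L i hL) as hvi.
  pose proof (mv_ge L hL) as hm.
  exists (a0, r). intros q [hx hy]. simpl in hx, hy. fold (pw j) in hx. fold (pv L j) in hy.
  split.
  - exists q. split; [|apply rst_refl]. unfold cell2; simpl. fold (pw j) (pv L j).
    rewrite minus_IZR, Z.sub_add. lra.
  - exists (fst q, snd q + pv L i / mv L). split.
    + unfold cell2; simpl. fold (pw j) (pv L j). rewrite !plus_IZR in *. lra.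
    + apply rst_sym. apply rst_step. exists i. split; auto.
      exists (IZR k + INR i' / 4, snd q / pv L i), (IZR k + INR i' / 4, snd q / pv L i + / mv L).
      split; [|split].
      * apply rst_step. exists k, l, i'. split; [|reflexivity]. split; auto. split. reflexivity. cbn [fst snd].
        assert (e1 : (IZR (3 * l) + INR i' - 1) / mv L = (IZR (3 * l) + INR i' - 1) * (pv L i / mv L) / pv L i) by (field; lra).
        assert (e2 : (IZR (3 * l) + INR i') / mv L = (IZR (3 * l) + INR i') * (pv L i / mv L) / pv L i) by (field; lra).
        rewrite e1, e2. split; apply Rmult_le_compat_r; try (apply Rlt_le, Rinv_0_lt_compat; lra); lra.
      * destruct q as [qx qy]. unfold Phi_pow; simpl in *. fold (pw i) (pv L i). f_equal. lra. field; lra.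
      * destruct q as [qx qy]. unfold Phi_pow; simpl in *. fold (pw i) (pv L i). f_equal. lra. field; lra.
Qed.

Lemma vstep L j a b : (100 <= L)%nat -> hgle L j (a, b) (a, (b + 1)%Z) 16.
Proof. intro hL.
  set (i' := (Z.to_nat (b mod 3) + 1)%nat). set (l := (b / 3)%Z). set (k := (a / 4)%Z).
  set (a0 := (4 * k + Z.of_nat i')%Z).
  assert (hb3 : (0 <= b mod 3 < 3)%Z) by (apply Z.mod_pos_bound; lia).
  assert (ha4 : (0 <= a mod 4 < 4)%Z) by (apply Z.mod_pos_bound; lia).
  assert (hbd : b = (3 * l + b mod 3)%Z) by (unfold l; apply Z.div_mod; lia).
  assert (had : a = (4 * k + a mod 4)%Z) by (unfold k; apply Z.div_mod; lia).
  assert (hi' : Z.of_nat i' = (b mod 3 + 1)%Z) by (unfold i'; lia).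
  assert (hsv : shares_vertical L j ((a0 - 1)%Z, b) (a0, (b + 1)%Z)).
  { pose proof (pv_pos L j hL). pose proof (mv_ge L hL).
    assert (hw : pw (j - 1) = 4 * pw j) by (pose proof (pw_S (j - 1)) as h; replace (j - 1 + 1)%Z with j in h by lia; lra).
    assert (hv : pv L j = pv L (j - 1) / mv L) by (pose proof (pv_S L (j - 1) hL) as h; replace (j - 1 + 1)%Z with j in h by lia; lra).
    apply (jump L j (j - 1) k l i'); auto; try lia.
    - unfold a0. rewrite plus_IZR, mult_IZR, INR_IZR_INZ, hw. field.
    - rewrite hv. ring.
    - rewrite <- hv, INR_IZR_INZ, hi'. replace (IZR b) with (IZR (3 * l + b mod 3)) by (f_equal; lia).
      rewrite !plus_IZR. right. ring.
    - rewrite <- hv, INR_IZR_INZ, hi'. replace (IZR (b + 1)) with (IZR (3 * l + b mod 3) + 1) by (rewrite <- plus_IZR; f_equal; lia).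
      rewrite !plus_IZR. right. ring. }
  replace 16%nat with (7 + (2 + 7))%nat by lia.
  apply hgle_trans with ((a0 - 1)%Z, b).
  { eapply hgle_mono. apply hgle_horiz'. unfold a0, i'. lia. }
  apply hgle_trans with (a0, (b + 1)%Z). apply sv_hgle; auto.
  eapply hgle_mono. apply hgle_horiz'. unfold a0, i'. lia.
Qed.

Lemma vert_up L j a b (hL : (100 <= L)%nat) : forall d : nat, hgle L j (a, b) (a, (b + Z.of_nat d)%Z) (16 * d + 1).
Proof. induction d. replace (b + Z.of_nat 0)%Z with b by lia. apply hgle_refl.
  replace (16 * S d + 1)%nat with ((16 * d + 1) + 16)%nat by lia.
  apply hgle_trans with (a, (b + Z.of_nat d)%Z); auto.
  replace (b + Z.of_nat (S d))%Z with (b + Z.of_nat d + 1)%Z by lia. apply vstep; auto. Qed.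

Lemma vert L j a b b' (hL : (100 <= L)%nat) : hgle L j (a, b) (a, b') (16 * Z.to_nat (Z.abs (b' - b)) + 1).
Proof. destruct (Z_le_gt_dec b b').
  - replace b' with (b + Z.of_nat (Z.to_nat (Z.abs (b' - b))))%Z at 1 by lia. apply vert_up; auto.
  - apply hgle_sym. replace b with (b' + Z.of_nat (Z.to_nat (Z.abs (b' - b))))%Z at 1 by lia. apply vert_up; auto. Qed.

Lemma conn L j a b a' b' (hL : (100 <= L)%nat) :
  hgle L j (a, b) (a', b') (2 * Z.to_nat (Z.abs (a' - a)) + 1 + (16 * Z.to_nat (Z.abs (b' - b)) + 1)).
Proof. apply hgle_trans with (a', b). apply hgle_horiz'. apply vert; auto. Qed.

Lemma up_bound z r : IZR z <= r -> (z < up r)%Z.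
Proof. intro h. destruct (archimed r) as [h1 _]. apply lt_IZR. lra. Qed.

Definition nb (r : R) : nat := Z.to_nat (up r).

Lemma conn_R L j a b a' b' X Y (hL : (100 <= L)%nat) : IZR (Z.abs (a' - a)) <= X -> IZR (Z.abs (b' - b)) <= Y ->
  hgle L j (a, b) (a', b') (2 * nb X + 16 * nb Y + 2).
Proof. intros hx hy. apply up_bound in hx. apply up_bound in hy. eapply hgle_mono. apply conn; auto.
  unfold nb. lia. Qed.

Lemma idx_help (a a' x x' w : R) : 0 < w -> a * w <= x <= (a + 1) * w -> a' * w <= x' <= (a' + 1) * w ->
  Rabs (a' - a) <= Rabs (x' - x) / w + 1.
Proof. intros hw [h1 h2] [h3 h4].
  apply Rmult_le_reg_r with w; auto.
  replace ((Rabs (x' - x) / w + 1) * w) with (Rabs (x' - x) + w) by (field; lra).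
  pose proof (Rle_abs (x' - x)). pose proof (Rle_abs (- (x' - x))). rewrite Rabs_Ropp in H0.
  unfold Rabs at 1. destruct (Rcase_abs (a' - a)); nra. Qed.

Lemma cell_idx L j a b a' b' z z' : (100 <= L)%nat -> cell2 L j (a, b) z -> cell2 L j (a', b') z' ->
  (IZR (Z.abs (a' - a)) <= Rabs (fst z' - fst z) / pw j + 1) /\
  (IZR (Z.abs (b' - b)) <= Rabs (snd z' - snd z) / pv L j + 1).
Proof. intro hL. unfold cell2; simpl. fold (pw j) (pv L j). rewrite !plus_IZR. intros [hx hy] [hx' hy'].
  rewrite !abs_IZR, !minus_IZR. split; apply idx_help; auto. apply pw_pos. apply pv_pos; auto. Qed.

Lemma cell_of L j (z : pt) : (100 <= L)%nat ->
  cell2 L j (Zfloor (fst z / pw j), Zfloor (snd z / pv L j)) z.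
Proof. intro hL. pose proof (pw_pos j). pose proof (pv_pos L j hL).
  destruct (Zfloor_bound (fst z / pw j)) as [h1 h2]. destruct (Zfloor_bound (snd z / pv L j)) as [h3 h4].
  unfold cell2; simpl. fold (pw j) (pv L j). rewrite !plus_IZR.
  assert (fst z = fst z / pw j * pw j) by (field; lra).
  assert (snd z = snd z / pv L j * pv L j) by (field; lra).
  split; split; nra. Qed.

Definition MV (L : nat) : Z := (3 * Z.of_nat L)%Z.
Lemma MV_eq L : IZR (MV L) = mv L.
Proof. unfold MV, mv. rewrite mult_IZR, <- INR_IZR_INZ. reflexivity. Qed.

Lemma pv_mult L n0 i : (100 <= L)%nat -> (n0 <= i)%Z ->
  pv L n0 = IZR (MV L ^ (i - n0)) * pv L i.
Proof. intros hL h. rewrite (pv_shift L n0 (Z.to_nat (i - n0)) hL).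
  replace (n0 + Z.of_nat (Z.to_nat (i - n0)))%Z with i by lia.
  rewrite <- MV_eq, pow_IZR. replace (Z.of_nat (Z.to_nat (i - n0))) with (i - n0)%Z by lia. reflexivity. Qed.

Definition trp (t : R) (z : pt) : pt := (fst z, snd z + t).
Definition trs (t : R) (s : stp) : stp := mkS (slev s) (scell s) (trp t (sa s)) (trp t (sb s)).

Lemma tr_step L n0 m s : (100 <= L)%nat -> (n0 <= slev s)%Z -> stepOK L s ->
  stepOK L (trs (IZR m * pv L n0) s).
Proof. intros hL hlev hok. pose proof (pv_pos L (slev s) hL) as hp. pose proof (mv_ge L hL) as hm.
  rewrite (pv_mult L n0 (slev s) hL hlev). set (i := slev s) in *. set (E := (MV L ^ (i - n0))%Z).
  unfold stepOK, trs in *; simpl. destruct (scell s).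
  - destruct hok as [c [h1 h2]]. exists (fst c, (snd c + m * E)%Z). unfold cell2, trp in *; simpl in *.
    replace (powerRZ (mv L) (- slev s)) with (pv L i) in * by reflexivity.
    rewrite !plus_IZR, mult_IZR in *. split; split; lra.
  - destruct hok as [p0 [k [l [i' [ha hab]]]]].
    exists (fst p0, snd p0 + IZR (m * E)), k, (l + m * E * Z.of_nat L)%Z, i'. split.
    + destruct ha as [hi [hx hy]]. split; auto. split; auto. cbn [fst snd].
      assert (e : IZR (3 * (l + m * E * Z.of_nat L)) = IZR (3 * l) + IZR (m * E) * mv L).
      { unfold mv. rewrite INR_IZR_INZ, <- mult_IZR, <- mult_IZR, <- plus_IZR. f_equal. ring. }
      rewrite e.
      assert (e1 : (IZR (3 * l) + IZR (m * E) * mv L + INR i' - 1) / mv L = (IZR (3 * l) + INR i' - 1) / mv L + IZR (m * E)) by (field; lra).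
      assert (e2 : (IZR (3 * l) + IZR (m * E) * mv L + INR i') / mv L = (IZR (3 * l) + INR i') / mv L + IZR (m * E)) by (field; lra).
      rewrite e1, e2. lra.
    + unfold trp. rewrite mult_IZR.
      destruct hab as [[-> ->]|[-> ->]]; [left|right]; unfold Phi_pow; simpl; fold (pw i) (pv L i); replace (powerRZ (mv L) (- slev s)) with (pv L i) by reflexivity; split; f_equal; ring.
Qed.

Lemma tr_chain L n0 m p l q : (100 <= L)%nat -> chain L p l q -> Forall (fun s => (n0 <= slev s)%Z) l ->
  chain L (trp (IZR m * pv L n0) p) (map (trs (IZR m * pv L n0)) l) (trp (IZR m * pv L n0) q) /\
  cost (map (trs (IZR m * pv L n0)) l) = cost l /\ Forall (fun s => (n0 <= slev s)%Z) (map (trs (IZR m * pv L n0)) l).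
Proof. intros hL. induction 1; intro hf. simpl. split; [constructor|split; auto].
  inversion hf as [|? ? h1 h2]; subst. destruct (IHchain h2) as [c1 [c2 c3]].
  split; [|split]. simpl. econstructor. unfold trs; simpl. reflexivity. apply tr_step; auto. exact c1.
  simpl. rewrite c2. reflexivity. simpl. constructor; auto. Qed.

Lemma unfold_chain L n0 (S0 : Z) p l q : (100 <= L)%nat -> chain L p l q ->
  Forall (fun s => (n0 <= slev s)%Z \/
     (scell s = false /\ fst (sb s) = fst (sa s) /\
      (snd (sb s) = snd (sa s) + IZR S0 * pv L n0 \/ snd (sb s) = snd (sa s) - IZR S0 * pv L n0))) l ->
  exists l' (N : Z), chain L p l' (fst q, snd q - IZR N * (IZR S0 * pv L n0)) /\ cost l' = cost l /\
     Forall (fun s => (n0 <= slev s)%Z) l'.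
Proof. intros hL. induction 1 as [p|p s l q esa hok hch IH]; intro hf.
  - exists nil, 0%Z. split; [|split; auto]. replace (fst p, snd p - IZR 0 * (IZR S0 * pv L n0)) with p.
    constructor. destruct p; simpl; f_equal; ring.
  - inversion hf as [|? ? h1 h2]; subst. destruct (IH h2) as [l' [N [c1 [c2 c3]]]].
    destruct h1 as [hfine|[hc [hx hy]]].
    + exists (s :: l'), N. split; [|split]. econstructor; eauto. simpl. rewrite c2; auto. constructor; auto.
    + assert (hs : exists e : Z, snd (sb s) = snd (sa s) + IZR e * (IZR S0 * pv L n0) /\ (e = 1 \/ e = -1)%Z).
      { destruct hy as [hy|hy]; [exists 1%Z|exists (-1)%Z]; split; auto; rewrite hy; simpl; ring. }
      destruct hs as [e [he _]].
      destruct (tr_chain L n0 (- (e * S0)) _ _ _ hL c1 c3) as [d1 [d2 d3]].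
      exists (map (trs (IZR (- (e * S0)) * pv L n0)) l'), (N + e)%Z. split; [|split].
      * replace (sa s) with (trp (IZR (- (e * S0)) * pv L n0) (sb s)).
        replace (fst q, snd q - IZR (N + e) * (IZR S0 * pv L n0)) with
          (trp (IZR (- (e * S0)) * pv L n0) (fst q, snd q - IZR N * (IZR S0 * pv L n0))).
        exact d1.
        unfold trp; simpl. rewrite opp_IZR, mult_IZR, plus_IZR. f_equal; ring.
        unfold trp. rewrite he, hx. rewrite opp_IZR, mult_IZR. destruct (sa s); simpl; f_equal; ring.
      * rewrite d2, c2. simpl. rewrite hc. ring.
      * auto.
Qed.

Lemma four_adic (k1 k2 : Z) (i1 i2 : Z) (e1 e2 : nat) : (1 <= i1 <= 3)%Z -> (1 <= i2 <= 3)%Z ->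
  ((4 * k1 + i1) * 4 ^ Z.of_nat e1 = (4 * k2 + i2) * 4 ^ Z.of_nat e2)%Z -> e1 = e2 /\ k1 = k2 /\ i1 = i2.
Proof.
  assert (key : forall k1 k2 i1 i2 (e f : nat), (1 <= i1 <= 3)%Z -> (1 <= i2 <= 3)%Z ->
     ((4 * k1 + i1) * 4 ^ Z.of_nat e = (4 * k2 + i2) * 4 ^ Z.of_nat (e + f))%Z -> f = 0%nat /\ k1 = k2 /\ i1 = i2).
  { intros a1 a2 b1 b2 e f h1 h2 h. rewrite Nat2Z.inj_add, Z.pow_add_r in h by lia.
    assert (hp : (4 ^ Z.of_nat e > 0)%Z) by (apply Z.lt_gt, Z.pow_pos_nonneg; lia).
    assert (h' : (4 * a1 + b1 = (4 * a2 + b2) * 4 ^ Z.of_nat f)%Z).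
    { apply Z.mul_reg_r with (4 ^ Z.of_nat e)%Z. lia. rewrite h. ring. }
    clear h. destruct f. { replace (Z.of_nat 0) with 0%Z in h' by reflexivity. rewrite Z.pow_0_r, Z.mul_1_r in h'. lia. }
    rewrite Nat2Z.inj_succ, Z.pow_succ_r in h' by lia.
    set (X := ((4 * a2 + b2) * 4 ^ Z.of_nat f)%Z) in *.
    assert (4 * a1 + b1 = 4 * X)%Z by (unfold X in *; lia). lia. }
  intros h1 h2 h. destruct (Nat.le_ge_cases e1 e2).
  - replace e2 with (e1 + (e2 - e1))%nat in h by lia. destruct (key _ _ _ _ _ _ h1 h2 h) as [? [? ?]]. lia.
  - replace e1 with (e2 + (e1 - e2))%nat in h by lia. symmetry in h. destruct (key _ _ _ _ _ _ h2 h1 h) as [? [? ?]]. lia.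
Qed.

Lemma pw_mult n0 i : (i <= n0)%Z -> pw i = IZR (4 ^ (n0 - i)) * pw n0.
Proof. intro h. rewrite (pw_shift i (Z.to_nat (n0 - i))).
  replace (i + Z.of_nat (Z.to_nat (n0 - i)))%Z with n0 by lia.
  replace (4 : R) with (IZR 4) by reflexivity. rewrite pow_IZR.
  replace (Z.of_nat (Z.to_nat (n0 - i))) with (n0 - i)%Z by lia. reflexivity. Qed.

Lemma xsep n0 i1 i2 k1 k2 (j1 j2 : nat) x1 x2 : (i1 < n0)%Z -> (i2 < n0)%Z ->
  (1 <= j1 <= 3)%nat -> (1 <= j2 <= 3)%nat ->
  x1 = (IZR k1 + INR j1 / 4) * pw i1 -> x2 = (IZR k2 + INR j2 / 4) * pw i2 ->
  Rabs (x2 - x1) < pw n0 -> i1 = i2 /\ k1 = k2 /\ j1 = j2.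
Proof. intros hi1 hi2 hj1 hj2 -> -> h.
  assert (e1 : (IZR k1 + INR j1 / 4) * pw i1 = IZR ((4 * k1 + Z.of_nat j1) * 4 ^ (n0 - i1 - 1)) * pw n0).
  { rewrite (pw_mult n0 i1) by lia. replace (4 ^ (n0 - i1))%Z with (4 * 4 ^ (n0 - i1 - 1))%Z by (rewrite <- Z.pow_succ_r by lia; f_equal; lia).
    rewrite !mult_IZR, plus_IZR, mult_IZR, INR_IZR_INZ. field. }
  assert (e2 : (IZR k2 + INR j2 / 4) * pw i2 = IZR ((4 * k2 + Z.of_nat j2) * 4 ^ (n0 - i2 - 1)) * pw n0).
  { rewrite (pw_mult n0 i2) by lia. replace (4 ^ (n0 - i2))%Z with (4 * 4 ^ (n0 - i2 - 1))%Z by (rewrite <- Z.pow_succ_r by lia; f_equal; lia).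
    rewrite !mult_IZR, plus_IZR, mult_IZR, INR_IZR_INZ. field. }
  rewrite e1, e2 in h. rewrite <- Rmult_minus_distr_r, <- minus_IZR, Rabs_mult in h.
  pose proof (pw_pos n0). rewrite (Rabs_right (pw n0)) in h by lra.
  assert (hz : Rabs (IZR ((4 * k2 + Z.of_nat j2) * 4 ^ (n0 - i2 - 1) - (4 * k1 + Z.of_nat j1) * 4 ^ (n0 - i1 - 1))) < 1).
  { apply Rmult_lt_reg_r with (pw n0); lra. }
  rewrite <- abs_IZR in hz. apply lt_IZR in hz.
  assert (hzz : ((4 * k1 + Z.of_nat j1) * 4 ^ Z.of_nat (Z.to_nat (n0 - i1 - 1)) = (4 * k2 + Z.of_nat j2) * 4 ^ Z.of_nat (Z.to_nat (n0 - i2 - 1)))%Z).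
  { rewrite !Z2Nat.id by lia. lia. }
  apply four_adic in hzz; try lia. Qed.

Lemma cell_rows L j a b z : (100 <= L)%nat -> cell2 L j (a, b) z ->
  (IZR a <= fst z / pw j <= IZR a + 1) /\ (IZR b <= snd z / pv L j <= IZR b + 1).
Proof. intros hL. unfold cell2; simpl. fold (pw j) (pv L j). rewrite !plus_IZR. intros [[h1 h2] [h3 h4]].
  pose proof (pw_pos j). pose proof (pv_pos L j hL).
  split; split.
  - apply Rmult_le_reg_r with (pw j); auto. field_simplify; lra.
  - apply Rmult_le_reg_r with (pw j); auto. field_simplify; lra.
  - apply Rmult_le_reg_r with (pv L j); auto. field_simplify; lra.
  - apply Rmult_le_reg_r with (pv L j); auto. field_simplify; lra. Qed.

Ltac zr := repeat rewrite ?plus_IZR, ?minus_IZR, ?opp_IZR in *.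

Lemma absZ (z : Z) (Y : R) : - Y <= IZR z <= Y -> IZR (Z.abs z) <= Y.
Proof. intros [h1 h2]. rewrite abs_IZR. apply Rabs_le. lra. Qed.

Lemma Rabs_le_inv a b : Rabs a <= b -> - b <= a <= b.
Proof. intro h. pose proof (Rle_abs a). pose proof (Rle_abs (- a)). rewrite Rabs_Ropp in H0. lra. Qed.

Definition FG (D' : R) : nat := (2 * nb 2 + 16 * nb (2 * D' + 4) + 2)%nat.
Definition FB (D' : R) : nat := (3 * FG D' + 4)%nat.

Lemma connG L j a b a' b' D' (hL : (100 <= L)%nat) : - 2 <= IZR (a' - a) <= 2 ->
  - (2 * D' + 4) <= IZR (b' - b) <= 2 * D' + 4 -> hgle L j (a, b) (a', b') (FG D').
Proof. intros h1 h2. apply conn_R; auto; apply absZ; auto. Qed.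

Lemma fold_core L j a0 S b0 D' (N : Z) ya yb aa ba ab bb (hL : (100 <= L)%nat) :
  (1 <= S)%Z -> 0 <= D' -> D' <= IZR S / 2 ->
  (forall r, (b0 <= r <= b0 + S - 1)%Z -> shares_vertical L j ((a0 - 1)%Z, r) (a0, (r + S)%Z)) ->
  (aa = a0 - 1 \/ aa = a0)%Z -> (ab = a0 - 1 \/ ab = a0)%Z ->
  IZR b0 <= ya <= IZR b0 + 2 * IZR S -> IZR b0 <= yb <= IZR b0 + 2 * IZR S ->
  IZR ba <= ya <= IZR ba + 1 -> IZR bb <= yb <= IZR bb + 1 ->
  Rabs (yb - ya - IZR N * IZR S) <= D' -> (0 <= N)%Z ->
  hgle L j (aa, ba) (ab, bb) (FB D').
Proof. intros hS hD hDS hjump haa hab hya hyb hba hbb hN hN0.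
  apply Rabs_le_inv in hN.
  assert (hS' : 1 <= IZR S) by (apply IZR_le; lia).
  assert (hNS : IZR N * IZR S < 3 * IZR S) by lra.
  assert (hN3 : (N < 3)%Z) by (apply lt_IZR; apply Rmult_lt_reg_r with (IZR S); lra).
  assert (hcol : forall x, (x = a0 - 1 \/ x = a0)%Z -> forall y, (y = a0 - 1 \/ y = a0)%Z -> - 2 <= IZR (y - x) <= 2).
  { intros x hx y hy. rewrite minus_IZR. destruct hx as [->| ->]; destruct hy as [->| ->]; rewrite ?minus_IZR; lra. }
  unfold FB.
  assert (hN012 : (N = 0 \/ N = 1 \/ N = 2)%Z) by lia. destruct hN012 as [ -> | [ -> | -> ] ].
  - eapply hgle_mono. refine (connG L j _ _ _ _ D' hL _ _); [apply hcol; auto|]. rewrite minus_IZR. rewrite Rmult_0_l in hN. split; lra. lia.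
  - set (r := Z.max b0 (Z.min ba (b0 + S - 1))).
    assert (hr : (b0 <= r <= b0 + S - 1)%Z) by (unfold r; lia).
    assert (hr2 : ((r = b0 /\ ba < b0) \/ r = ba \/ (r = b0 + S - 1 /\ b0 + S - 1 < ba))%Z) by (unfold r; lia).
    rewrite Rmult_1_l in hN.
    replace (3 * FG D' + 4)%nat with (FG D' + (2 + (FG D' + FG D' + 2)))%nat by lia.
    apply hgle_trans with ((a0 - 1)%Z, r).
    { refine (connG L j _ _ _ _ D' hL _ _); [apply hcol; auto|].
      destruct hr2 as [[-> h]|[->|[-> h]]]; rewrite ?minus_IZR.
      - assert (h' : (ba <= b0 - 1)%Z) by lia. apply IZR_le in h'. rewrite minus_IZR in h'. lra.
      - lra.
      - assert (h' : (b0 + S - 1 + 1 <= ba)%Z) by lia. apply IZR_le in h'. zr. lra. }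
    apply hgle_trans with (a0, (r + S)%Z). apply sv_hgle, hjump; auto.
    eapply hgle_mono. refine (connG L j _ _ _ _ D' hL _ _); [apply hcol; auto|].
    destruct hr2 as [[-> h]|[->|[-> h]]]; rewrite ?minus_IZR, ?plus_IZR.
    + assert (h' : (ba <= b0 - 1)%Z) by lia. apply IZR_le in h'. rewrite minus_IZR in h'. lra.
    + lra.
    + assert (h' : (b0 + S - 1 + 1 <= ba)%Z) by lia. apply IZR_le in h'. zr. lra.
    + lia.
  - replace (3 * FG D' + 4)%nat with (FG D' + (2 + (FG D' + (2 + FG D'))))%nat by lia.
    apply hgle_trans with ((a0 - 1)%Z, b0).
    { refine (connG L j _ _ _ _ D' hL _ _); [apply hcol; auto|]. zr. lra. }
    apply hgle_trans with (a0, (b0 + S)%Z). apply sv_hgle, hjump; lia.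
    apply hgle_trans with ((a0 - 1)%Z, (b0 + S - 1)%Z).
    { refine (connG L j _ _ _ _ D' hL _ _); [zr; lra|]. zr. lra. }
    apply hgle_trans with (a0, (b0 + S - 1 + S)%Z). apply sv_hgle, hjump; lia.
    refine (connG L j _ _ _ _ D' hL _ _); [apply hcol; auto|]. zr. lra.
Qed.

Lemma fold_gal L j a0 S b0 D (N : Z) za zb ca cb (hL : (100 <= L)%nat) :
  (1 <= S)%Z -> 0 <= D -> D <= IZR S * pv L j / 2 ->
  (forall r, (b0 <= r <= b0 + S - 1)%Z -> shares_vertical L j ((a0 - 1)%Z, r) (a0, (r + S)%Z)) ->
  fst za = IZR a0 * pw j -> fst zb = IZR a0 * pw j ->
  IZR b0 * pv L j <= snd za <= (IZR b0 + 2 * IZR S) * pv L j ->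
  IZR b0 * pv L j <= snd zb <= (IZR b0 + 2 * IZR S) * pv L j ->
  Rabs (snd zb - snd za - IZR N * (IZR S * pv L j)) <= D ->
  cell2 L j ca za -> cell2 L j cb zb -> hgle L j ca cb (FB (D / pv L j)).
Proof. intros hS hD hDS hjump hxa hxb hya hyb hN hca hcb.
  pose proof (pw_pos j) as hw. pose proof (pv_pos L j hL) as hv.
  set (V := pv L j) in *.
  destruct ca as [aa ba]. destruct cb as [ab bb].
  destruct (cell_rows L j _ _ _ hL hca) as [hxa' hya']. destruct (cell_rows L j _ _ _ hL hcb) as [hxb' hyb'].
  fold V in hya', hyb'.
  rewrite hxa in hxa'. rewrite hxb in hxb'.
  replace (IZR a0 * pw j / pw j) with (IZR a0) in hxa', hxb' by (field; lra).
  assert (haa : (aa = a0 - 1 \/ aa = a0)%Z).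
  { destruct hxa' as [h1 h2]. apply le_IZR in h1. rewrite <- plus_IZR in h2. apply le_IZR in h2. lia. }
  assert (hab : (ab = a0 - 1 \/ ab = a0)%Z).
  { destruct hxb' as [h1 h2]. apply le_IZR in h1. rewrite <- plus_IZR in h2. apply le_IZR in h2. lia. }
  assert (hdiv : forall y, IZR b0 * V <= y <= (IZR b0 + 2 * IZR S) * V -> IZR b0 <= y / V <= IZR b0 + 2 * IZR S).
  { intros y [h1 h2]. split; apply Rmult_le_reg_r with V; auto; field_simplify; lra. }
  assert (hN' : Rabs (snd zb / V - snd za / V - IZR N * IZR S) <= D / V).
  { replace (snd zb / V - snd za / V - IZR N * IZR S) with ((snd zb - snd za - IZR N * (IZR S * V)) / V) by (field; lra).
    unfold Rdiv. rewrite Rabs_mult, (Rabs_right (/ V)) by (apply Rle_ge, Rlt_le, Rinv_0_lt_compat; lra).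
    apply Rmult_le_compat_r; [apply Rlt_le, Rinv_0_lt_compat; lra|auto]. }
  assert (hD0 : 0 <= D / V) by (apply Rmult_le_pos; [lra|apply Rlt_le, Rinv_0_lt_compat; lra]).
  assert (hDS' : D / V <= IZR S / 2) by (apply Rmult_le_reg_r with V; auto; field_simplify; lra).
  destruct (Z_le_gt_dec 0 N).
  - apply (fold_core L j a0 S b0 (D / V) N (snd za / V) (snd zb / V)); auto; apply hdiv; auto.
  - apply hgle_sym. apply (fold_core L j a0 S b0 (D / V) (- N) (snd zb / V) (snd za / V)); auto; try (apply hdiv; auto).
    + rewrite opp_IZR. replace (snd za / V - snd zb / V - - IZR N * IZR S) with (- (snd zb / V - snd za / V - IZR N * IZR S)) by ring.
      rewrite Rabs_Ropp. auto.
    + lia.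
Qed.

Lemma cost_in s l : In s l -> scell s = true -> pw (slev s) <= cost l.
Proof. induction l; simpl. intros []. intros [->|h] hc.
  - rewrite hc. pose proof (cost_nonneg l). lra.
  - pose proof (IHl h hc). destruct (scell a); [pose proof (pw_pos (slev a))|]; lra. Qed.

Lemma pw_anti i n : (i <= n)%Z -> pw n <= pw i.
Proof. intro h. rewrite (pw_mult n i h). pose proof (pw_pos n).
  assert (1 <= IZR (4 ^ (n - i))). { apply IZR_le. assert (0 < 4 ^ (n - i))%Z by (apply Z.pow_pos_nonneg; lia). lia. }
  nra. Qed.

Lemma pv_anti L i n : (100 <= L)%nat -> (i <= n)%Z -> pv L n <= pv L i.
Proof. intros hL h. rewrite (pv_mult L i n hL h). pose proof (pv_pos L n hL).
  assert (1 <= IZR (MV L ^ (n - i))). { apply IZR_le. assert (0 < MV L ^ (n - i))%Z by (apply Z.pow_pos_nonneg; unfold MV; lia). lia. }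
  nra. Qed.

Lemma chain_steps L p l q : chain L p l q -> Forall (stepOK L) l.
Proof. induction 1; constructor; auto. Qed.

Lemma Rb_lemma L (hL : (100 <= L)%nat) n0 K H c z1 l1 z2 : chain L z1 l1 z2 ->
  Forall (fun s => (n0 <= slev s)%Z) l1 -> cost l1 <= c -> c < K * H -> 16 * (K * H) <= pw n0 ->
  Rabs (snd z2 - snd z1) <= pv L n0 / 7.
Proof. intros hc hf hcl hcK hK.
  pose proof (Qbound L hL n0 z1 l1 z2 hc hf) as h. pose proof (pv_pos L n0 hL). pose proof (pw_pos n0).
  pose proof (mv_ge L hL). pose proof (cost_nonneg l1).
  assert (h1 : pv L n0 / pw n0 * cost l1 <= pv L n0 / 16).
  { apply Rmult_le_reg_r with (pw n0); auto. replace (pv L n0 / pw n0 * cost l1 * pw n0) with (pv L n0 * cost l1) by (field; lra).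
    replace (pv L n0 / 16 * pw n0) with (pv L n0 * (pw n0 / 16)) by field. apply Rmult_le_compat_l; lra. }
  assert (h2 : 3 * pv L n0 / mv L <= pv L n0 / 100).
  { apply Rmult_le_reg_r with (mv L); [lra|]. field_simplify; nra. }
  lra. Qed.

Lemma SB L (hL : (100 <= L)%nat) n0 c0 i k lb (i' : nat) :
  (forall z1 l1 z2, chain L z1 l1 z2 -> Forall (fun s => (n0 <= slev s)%Z) l1 -> cost l1 <= c0 ->
     Rabs (snd z2 - snd z1) <= pv L n0 / 7) ->
  c0 < pw n0 -> (i < n0)%Z -> (1 <= i' <= 3)%nat ->
  forall len l z q, (length l <= len)%nat -> chain L z l q -> cost l <= c0 -> Reg L i k lb i' z ->
  Forall (fun s => ~ (n0 <= slev s)%Z -> slev s = i /\ scell s = false /\ Reg L i k lb i' (sa s) /\ Reg L i k lb i' (sb s)) l.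
Proof. intros hfine hc0 hi hi'. induction len; intros l z q hlen hch hcost hreg.
  { destruct l; [constructor|simpl in hlen; lia]. }
  destruct (first_split (fun s => ~ (n0 <= slev s)%Z) l) as [allf|[a [g [b [e [fa pg]]]]]].
  { rewrite Forall_forall in *. intros x hx hn. exfalso. apply (allf x hx hn). }
  assert (hfa : Forall (fun s => (n0 <= slev s)%Z) a).
  { rewrite Forall_forall in *. intros x hx. specialize (fa x hx). simpl in fa. lia. }
  subst l. apply chain_app_inv in hch. destruct hch as [r [ha hgb]].
  inversion hgb as [|p0 s0 r0 q0 esa hok hb]; subst p0 s0 r0 q0.
  rewrite cost_app in hcost. simpl in hcost. pose proof (cost_nonneg a). pose proof (cost_nonneg b).
  assert (hcl : scell g = false).
  { destruct (scell g) eqn:ec; auto. exfalso.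
    pose proof (pw_anti (slev g) n0 ltac:(lia)). lra. }
  rewrite hcl in hcost. unfold stepOK in hok. rewrite hcl in hok.
  destruct (glue_geom L _ _ _ hL hok) as [k2 [l2 [i2 [hi2 [hra [hrb _]]]]]].
  assert (hdx : Rabs (fst r - fst z) < pw n0) by (pose proof (chain_dx _ _ _ _ ha); lra).
  assert (hdy : Rabs (snd r - snd z) <= pv L n0 / 7) by (apply (hfine z a r); auto; lra).
  destruct hreg as [hzx hzy]. subst r. destruct hra as [hrx hry].
  destruct (xsep n0 i (slev g) k k2 i' i2 (fst z) (fst (sa g)) hi ltac:(lia) hi' hi2 hzx hrx hdx) as [ei [ek ej]].
  subst k2 i2. rewrite <- ei in *.
  assert (el : lb = l2).
  { apply NNPP. intro hne.
    destruct (reg_sep L i k lb i' k l2 i' z (sa g) hL hi' hi' (conj hzx hzy) (conj hrx hry) ltac:(intuition)) as [h|h].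
    - pose proof (pw_S i). pose proof (pw_anti (i + 1) n0 ltac:(lia)). lra.
    - pose proof (pv_S L i hL). pose proof (pv_anti L (i + 1) n0 hL ltac:(lia)). pose proof (pv_pos L n0 hL). lra. }
  subst l2.
  apply Forall_app. split.
  - rewrite Forall_forall in *. intros x hx hn. exfalso. apply hn. apply hfa; auto.
  - constructor.
    + intros _. split; [try reflexivity; try (symmetry; assumption); auto|]. split; [auto|]. split; [exact (conj hrx hry)|exact hrb].
    + apply (IHlen b (sb g) q); auto. rewrite length_app in hlen. simpl in hlen. lia. lra.
Qed.

Lemma four_pow_ge (n : nat) : 1 + INR n <= 4 ^ n.
Proof. induction n. simpl. lra. rewrite S_INR. simpl. pose proof (pos_INR n). lra. Qed.

Lemma seg L j (hL : (100 <= L)%nat) c c' z z' K P n0 :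
  cell2 L j c z -> cell2 L j c' z' -> Rabs (fst z' - fst z) <= K * pw j ->
  Rabs (snd z' - snd z) <= pv L n0 / 7 -> pv L n0 = P * pv L j -> 0 <= P ->
  hgle L j c c' (2 * nb (K + 1) + 16 * nb (P + 1) + 2).
Proof. intros hc hc' hx hy hP hP0. destruct c as [a b]. destruct c' as [a' b'].
  destruct (cell_idx L j a b a' b' z z' hL hc hc') as [h1 h2].
  pose proof (pw_pos j) as hw. pose proof (pv_pos L j hL) as hv.
  apply conn_R; auto.
  - assert (Rabs (fst z' - fst z) / pw j <= K).
    { unfold Rdiv. apply Rmult_le_reg_r with (pw j); auto. rewrite Rmult_assoc, Rinv_l, Rmult_1_r; lra. }
    lra.
  - assert (Rabs (snd z' - snd z) / pv L j <= P / 7).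
    { unfold Rdiv. apply Rmult_le_reg_r with (pv L j); auto. rewrite Rmult_assoc, Rinv_l, Rmult_1_r by lra.
      rewrite hP in hy. lra. }
    lra.
Qed.

Theorem mainTheorem15 :
  forall (L : nat), (100 <= L)%nat ->
  forall d : pt -> pt -> R, largest_admissible L d ->
  forall C : R, 0 < C ->
  exists N : nat,
    forall (j : Z) (s0 s1 : Z * Z),
      set_dist_le d (cell2 L j s0) (cell2 L j s1) (C * powerRZ mh (- j)) ->
      exists g : list (Z * Z),
        horizontal_gallery L j g /\ (length g <= N)%nat /\
        nth 0 g (0%Z, 0%Z) = s0 /\ last g (0%Z, 0%Z) = s1.
Proof.
  intros L hL d hd C hC.
  set (K := C + 1).
  set (T := Z.to_nat (up (16 * K))).
  pose proof (mv_ge L hL) as hm.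
  assert (hT1 : 16 * K <= 4 ^ T).
  { destruct (archimed (16 * K)) as [h1 _].
    assert (INR T = IZR (up (16 * K))).
    { unfold T. rewrite INR_IZR_INZ, Z2Nat.id; auto. apply le_IZR. unfold K in *. lra. }
    pose proof (four_pow_ge T). lra. }
  set (P := mv L ^ T).
  assert (hP0 : 0 <= P) by (unfold P; apply pow_le; lra).
  set (Gb := (2 * nb (K + 1) + 16 * nb (P + 1) + 2)%nat).
  exists (Gb + FB (P / 7) + Gb)%nat.
  intros j s0 s1 hset.
  destruct (cheap_chain L d j s0 s1 C hd hC hset) as [p [q [l [hp [hq [hch hcost]]]]]].
  fold K in hcost.
  set (n0 := (j - Z.of_nat T)%Z).
  pose proof (pw_pos j) as hw. pose proof (pv_pos L j hL) as hv.
  assert (hpwn0 : pw n0 = 4 ^ T * pw j).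
  { rewrite (pw_shift n0 T). f_equal. f_equal. unfold n0; lia. }
  assert (hpvn0 : pv L n0 = P * pv L j).
  { rewrite (pv_shift L n0 T hL). unfold P. f_equal. f_equal. unfold n0; lia. }
  assert (hK : 0 < K) by (unfold K; lra).
  assert (hKH : 16 * (K * pw j) <= pw n0).
  { rewrite hpwn0. replace (16 * (K * pw j)) with ((16 * K) * pw j) by ring. apply Rmult_le_compat_r; lra. }
  assert (hc0 : cost l < pw n0) by (pose proof (pw_pos j); nra).
  assert (hfine : forall z1 l1 z2, chain L z1 l1 z2 -> Forall (fun s => (n0 <= slev s)%Z) l1 -> cost l1 <= cost l ->
     Rabs (snd z2 - snd z1) <= pv L n0 / 7).
  { intros z1 l1 z2 h1 h2 h3. apply (Rb_lemma L hL n0 K (pw j) (cost l) z1 l1 z2); auto. }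
  assert (suff : hgle L j s0 s1 (Gb + FB (P / 7) + Gb)).
  { destruct (first_split (fun s => ~ (n0 <= slev s)%Z) l) as [allf|[ch1 [g1 [rest [e [fa pg]]]]]].
    -
      assert (hf : Forall (fun s => (n0 <= slev s)%Z) l).
      { rewrite Forall_forall in *. intros x hx. specialize (allf x hx). simpl in allf. lia. }
      pose proof (hfine p l q hch hf (Rle_refl _)) as hy.
      pose proof (chain_dx _ _ _ _ hch) as hx.
      eapply hgle_mono. apply (seg L j hL s0 s1 p q K P n0); auto. lra. lia.
    -
      assert (hf1 : Forall (fun s => (n0 <= slev s)%Z) ch1).
      { rewrite Forall_forall in *. intros x hx. specialize (fa x hx). simpl in fa. lia. }
      assert (hin1 : In g1 l) by (rewrite e; apply in_or_app; right; left; auto).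
      rewrite e in hch. apply chain_app_inv in hch. destruct hch as [za [hch1 hrest]].
      assert (hcl : cost l = cost ch1 + cost (g1 :: rest)) by (rewrite e, cost_app; auto).
      pose proof (cost_nonneg ch1) as hcn1. pose proof (cost_nonneg (g1 :: rest)) as hcn2.
      assert (hg1c : scell g1 = false).
      { destruct (scell g1) eqn:ec; auto. exfalso. pose proof (cost_in g1 l hin1 ec).
        pose proof (pw_anti (slev g1) n0 ltac:(lia)). lra. }
      assert (hsteps := chain_steps _ _ _ _ hrest).
      inversion hrest as [|p0 s0' r0 q0 esa hok _]; subst p0 s0' r0 q0. subst za.
      unfold stepOK in hok. rewrite hg1c in hok.
      destruct (glue_geom L _ _ _ hL hok) as [k [lb [i' [hi' [hra [hrb _]]]]]].
      set (i := slev g1) in *.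
      assert (hi : (i < n0)%Z) by (unfold i; lia).
      assert (hij : (i < j)%Z) by (unfold n0 in hi; lia).
      pose proof (SB L hL n0 (cost l) i k lb i' hfine hc0 hi hi' (length (g1 :: rest)) (g1 :: rest) (sa g1) q
        (le_n _) hrest ltac:(lra) hra) as hSB.
      destruct (last_split (fun s => ~ (n0 <= slev s)%Z) (g1 :: rest)) as [mid [g2 [ch3 [e2 [pg2 f3]]]]].
      { exists g1. split; auto. left; auto. }
      assert (hin2 : In g2 (g1 :: rest)) by (rewrite e2; apply in_or_app; right; left; auto).
      assert (hf3 : Forall (fun s => (n0 <= slev s)%Z) ch3).
      { rewrite Forall_forall in *. intros x hx. specialize (f3 x hx). simpl in f3. lia. }
      assert (hrest' := hrest). rewrite e2 in hrest'. apply chain_app_inv in hrest'. destruct hrest' as [r2 [hmid hg2]].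
      inversion hg2 as [|p0 s0' r0 q0 esa2 hok2 hch3]; subst p0 s0' r0 q0. subst r2.
      assert (hcl2 : cost (g1 :: rest) = cost (mid ++ g2 :: nil) + cost ch3).
      { rewrite e2, !cost_app. simpl. ring. }
      pose proof (cost_nonneg (mid ++ g2 :: nil)). pose proof (cost_nonneg ch3).
      rewrite Forall_forall in hSB. destruct (hSB g2 hin2 pg2) as [hl2 [hc2 [hra2 hrb2]]].
      set (S0 := (MV L ^ (n0 - (i + 1)))%Z).
      assert (hS0 : IZR S0 * pv L n0 = pv L i / mv L).
      { rewrite <- pv_S by auto. unfold S0. symmetry. apply pv_mult; auto. lia. }
      assert (hmg : chain L (sa g1) (mid ++ g2 :: nil) (sb g2)).
      { apply chain_app with (sa g2). exact hmid. econstructor; eauto. constructor. }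
      assert (hsteps2 : Forall (stepOK L) (g1 :: rest)) by exact hsteps.
      assert (hUF : Forall (fun s => (n0 <= slev s)%Z \/
         (scell s = false /\ fst (sb s) = fst (sa s) /\
          (snd (sb s) = snd (sa s) + IZR S0 * pv L n0 \/ snd (sb s) = snd (sa s) - IZR S0 * pv L n0))) (mid ++ g2 :: nil)).
      { rewrite Forall_forall. intros x hx.
        assert (hxin : In x (g1 :: rest)) by (rewrite e2; apply in_app_or in hx; apply in_or_app; destruct hx as [h|[h|[]]]; [left; auto|right; left; auto]).
        destruct (Z_le_gt_dec n0 (slev x)) as [hfx|hnx]; [left; auto|right].
        destruct (hSB x hxin ltac:(lia)) as [hlx [hcx _]].
        rewrite Forall_forall in hsteps2. pose proof (hsteps2 x hxin) as hokx. unfold stepOK in hokx. rewrite hcx in hokx.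
        destruct (glue_geom L _ _ _ hL hokx) as [kx [lx [ix [_ [_ [_ hyx]]]]]].
        split; auto. split. apply (glue_x _ _ _ _ hokx). rewrite hS0. rewrite hlx in hyx. exact hyx. }
      destruct (unfold_chain L n0 S0 _ _ _ hL hmg hUF) as [l' [N' [hl' [hcl' hfl']]]].
      pose proof (hfine _ _ _ hl' hfl' ltac:(lra)) as hyN. simpl in hyN.
      pose proof (hfine _ _ _ hch1 hf1 ltac:(lra)) as hy1.
      pose proof (hfine _ _ _ hch3 hf3 ltac:(lra)) as hy3.
      pose proof (chain_dx _ _ _ _ hch1) as hx1. pose proof (chain_dx _ _ _ _ hch3) as hx3.
      set (S := (MV L ^ (j - i - 1))%Z).
      set (a0 := ((4 * k + Z.of_nat i') * 4 ^ (j - i - 1))%Z).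
      set (b0 := ((3 * lb + Z.of_nat i' - 1) * S)%Z).
      assert (hS1 : (1 <= S)%Z).
      { assert (0 < S)%Z by (unfold S; apply Z.pow_pos_nonneg; unfold MV; lia). lia. }
      assert (hSV : IZR S * pv L j = pv L i / mv L).
      { rewrite <- pv_S by auto. unfold S. replace (j - i - 1)%Z with (j - (i + 1))%Z by lia. symmetry. apply pv_mult; auto. lia. }
      assert (ha0 : IZR a0 * pw j = (IZR k + INR i' / 4) * pw i).
      { rewrite (pw_mult j i) by lia. unfold a0.
        replace (4 ^ (j - i))%Z with (4 * 4 ^ (j - i - 1))%Z by (rewrite <- Z.pow_succ_r by lia; f_equal; lia).
        rewrite !mult_IZR, plus_IZR, mult_IZR, INR_IZR_INZ. field. }
      assert (hb0 : IZR b0 = (IZR (3 * lb) + INR i' - 1) * IZR S).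
      { unfold b0. rewrite mult_IZR, minus_IZR, plus_IZR, INR_IZR_INZ. reflexivity. }
      assert (hjump : forall r, (b0 <= r <= b0 + S - 1)%Z -> shares_vertical L j ((a0 - 1)%Z, r) (a0, (r + S)%Z)).
      { intros r hr. apply (jump L j i k lb i' a0 r S hL hij hi' ha0 hSV).
        - rewrite <- hSV. replace ((IZR (3 * lb) + INR i' - 1) * (IZR S * pv L j)) with (IZR b0 * pv L j) by (rewrite hb0; ring).
          apply Rmult_le_compat_r; [lra|]. apply IZR_le; lia.
        - rewrite <- hSV. replace ((IZR (3 * lb) + INR i') * (IZR S * pv L j)) with (IZR (b0 + S) * pv L j) by (rewrite plus_IZR, hb0; ring).
          apply Rmult_le_compat_r; [lra|]. apply IZR_le; lia. }
      assert (hreg : forall z, Reg L i k lb i' z -> fst z = IZR a0 * pw j /\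
                 IZR b0 * pv L j <= snd z <= (IZR b0 + 2 * IZR S) * pv L j).
      { intros z [hzx [hzy1 hzy2]]. split. rewrite ha0; auto. rewrite <- hSV in hzy1, hzy2. rewrite hb0. split; nra. }
      destruct (hreg _ hra) as [hxa hya]. destruct (hreg _ hrb2) as [hxb hyb].
      pose proof (pv_anti L (i + 1) n0 hL ltac:(lia)) as hpva. rewrite pv_S in hpva by auto.
      pose proof (pv_pos L n0 hL) as hvn0.
      assert (hfold : hgle L j (Zfloor (fst (sa g1) / pw j), Zfloor (snd (sa g1) / pv L j))
                               (Zfloor (fst (sb g2) / pw j), Zfloor (snd (sb g2) / pv L j)) (FB (P / 7))).
      { replace (P / 7) with ((pv L n0 / 7) / pv L j) by (rewrite hpvn0; field; lra).
        apply (fold_gal L j a0 S b0 (pv L n0 / 7) N' (sa g1) (sb g2)); auto; try lra.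
        - rewrite hSV, <- hS0. replace (snd (sb g2) - snd (sa g1) - IZR N' * (IZR S0 * pv L n0)) with
            (snd (sb g2) - IZR N' * (IZR S0 * pv L n0) - snd (sa g1)) by ring. exact hyN.
        - apply cell_of; auto.
        - apply cell_of; auto. }
      replace (Gb + FB (P / 7) + Gb)%nat with (Gb + (FB (P / 7) + Gb))%nat by lia.
      apply hgle_trans with (Zfloor (fst (sa g1) / pw j), Zfloor (snd (sa g1) / pv L j)).
      { apply (seg L j hL s0 _ p (sa g1) K P n0); auto. apply cell_of; auto. lra. }
      apply hgle_trans with (Zfloor (fst (sb g2) / pw j), Zfloor (snd (sb g2) / pv L j)); auto.
      apply (seg L j hL _ s1 (sb g2) q K P n0); auto. apply cell_of; auto. lra. }
  destruct suff as [n [hgn hn]]. destruct (hg_gallery L j s0 s1 n hgn) as [g [hgal [hlen [h0 hlast]]]].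
  exists g. split; auto. split; auto. lia.
Qed.
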